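(* Let $\Sigma$ be a nonsingular fan in $\mathbb R^d$. Then the following are equivalent: (a) $\Sigma$ is pairwise convex; (b) for any two adjacent maximal cones $\sigma,\tau\in\Sigma_d$, the union $\sigma_{\le1}\cup\tau_{\le1}$ is convex. If moreover $\Sigma$ is finite and complete, these are also equivalent to: (c) $\Sigma$ is pairwise positive and $\mathcal P(\Sigma)$ is convex.
   Context: A fan is nonsingular if every maximal cone is generated by a $\mathbb Z$-basis of $\mathbb Z^d$; $\Sigma_d$ is the set of $d$-dimensional cones. Two maximal cones are adjacent if they share a face of dimension $d-1$; then one can write $\sigma=\operatorname{cone}\{v_1,\ldots,v_{d-1},v_d\}$, $\tau=\operatorname{cone}\{v_1,\ldots,v_{d-1},v'_d\}$ with both generating sets $\mathbb Z$-bases. $\Sigma$ is pairwise positive if always $v_d+v'_d\in\operatorname{cone}\{v_1,\ldots,v_{d-1}\}$, and pairwise convex if always $v_d+v'_d$ equals $0$, or $v_i$ for some $1\le i\le d-1$, or $v_i+v_j$ for some $1\le i,j\le d-1$. For $\sigma\in\Sigma_d$ generated by a basis $v_1,\dots,v_d$, $\sigma_{\le1}=\operatorname{conv}\{0,v_1,\ldots,v_d\}$, and $\mathcal P(\Sigma)=\bigcup_{\sigma\in\Sigma_d}\sigma_{\le1}$. $\Sigma$ is complete if the union of its cones is $\mathbb R^d$. *)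

(* Defs.v *)
From HB Require Import structures.
From mathcomp Require Import all_boot all_order all_algebra.
From mathcomp Require Import classical_sets reals.
Set Implicit Arguments. Unset Strict Implicit. Unset Printing Implicit Defensive.
Import Order.TTheory GRing.Theory Num.Theory.
Local Open Scope ring_scope.
Local Open Scope classical_set_scope.

Section Fans.
Variables (R : realType) (d : nat).
Local Notation vec := 'rV[R]_d.

Definition dotv (u x : vec) : R := \sum_(i < d) u 0 i * x 0 i.

Definition lattice_pt (v : vec) : Prop := forall i, v 0 i \is a Num.int.

Definition Zbasis (I : finType) (b : I -> vec) : Prop :=
  (forall i, lattice_pt (b i)) /\
  (forall w, lattice_pt w -> exists c : I -> int, w = \sum_i (c i)%:~R *: b i) /\
  (forall c c' : I -> int, \sum_i (c i)%:~R *: b i = \sum_i (c' i)%:~R *: b i ->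
     forall i, c i = c' i).

Definition cone (I : finType) (b : I -> vec) : set vec :=
  [set x | exists lam : I -> R, (forall i, 0 <= lam i) /\ x = \sum_i lam i *: b i].

Definition conv (I : finType) (b : I -> vec) : set vec :=
  [set x | exists lam : I -> R, [/\ forall i, 0 <= lam i, \sum_i lam i = 1 &
                                   x = \sum_i lam i *: b i]].

Definition convex (A : set vec) : Prop :=
  forall x y t, A x -> A y -> 0 <= t -> t <= 1 -> A ((1 - t) *: x + t *: y).

Definition ext (k : nat) (b : 'I_k -> vec) (v : vec) : option 'I_k -> vec :=
  fun o => match o with Some i => b i | None => v end.

(* sigma_{<=1} = conv{0, v_1, ..., v_d} for sigma = cone{v_1,...,v_d} *)
Definition cone_le1 (I : finType) (b : I -> vec) : set vec :=
  conv (fun o : option I => match o with Some i => b i | None => 0 end).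

Definition rat_spc (C : set vec) : Prop :=
  (exists (k : nat) (g : 'I_k -> vec), (forall i, lattice_pt (g i)) /\ C = cone g) /\
  (forall x, C x -> C (- x) -> x = 0).

Definition face (F C : set vec) : Prop :=
  exists u : vec, (forall x, C x -> 0 <= dotv u x) /\
                  F = C `&` [set x | dotv u x = 0].

Definition fan (S : set (set vec)) : Prop :=
  [/\ forall C, S C -> rat_spc C,
      forall C F, S C -> face F C -> S F &
      forall C C', S C -> S C' -> face (C `&` C') C /\ face (C `&` C') C'].

Definition lin_indep (k : nat) (b : 'I_k -> vec) : Prop :=
  forall c : 'I_k -> R, \sum_i c i *: b i = 0 -> forall i, c i = 0.

(* dimension of a cone = dimension of its linear span
   = maximal number of linearly independent vectors in it *)
Definition dim_ge (C : set vec) (k : nat) : Prop :=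
  exists b : 'I_k -> vec, (forall i, C (b i)) /\ lin_indep b.
Definition cone_dim (C : set vec) (k : nat) : Prop :=
  dim_ge C k /\ ~ dim_ge C k.+1.

Definition maximal_cone (S : set (set vec)) (C : set vec) : Prop :=
  S C /\ forall C', S C' -> C `<=` C' -> C' = C.

Definition nonsingular_fan (S : set (set vec)) : Prop :=
  fan S /\ forall C, maximal_cone S C ->
    exists b : 'I_d -> vec, Zbasis b /\ C = cone b.

Definition top_cones (S : set (set vec)) : set (set vec) :=
  [set C | S C /\ cone_dim C d].

Definition adjacent (S : set (set vec)) (s t : set vec) : Prop :=
  [/\ top_cones S s, top_cones S t, s <> t &
      exists F, [/\ face F s, face F t & cone_dim F d.-1]].

Definition adj_repr (s t : set vec) (k : nat) (u : 'I_k -> vec) (v v' : vec) : Prop :=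
  [/\ Zbasis (ext u v), Zbasis (ext u v'), s = cone (ext u v) & t = cone (ext u v')].

Definition pairwise_positive (S : set (set vec)) : Prop :=
  forall s t, adjacent S s t ->
  forall k (u : 'I_k -> vec) v v', adj_repr s t u v v' -> cone u (v + v').

Definition pairwise_convex (S : set (set vec)) : Prop :=
  forall s t, adjacent S s t ->
  forall k (u : 'I_k -> vec) v v', adj_repr s t u v v' ->
    [\/ v + v' = 0, exists i, v + v' = u i | exists i j, v + v' = u i + u j].

Definition PSigma (S : set (set vec)) : set vec :=
  [set x | exists s, top_cones S s /\
     exists b : 'I_d -> vec, [/\ Zbasis b, s = cone b & cone_le1 b x]].

Definition complete_fan (S : set (set vec)) : Prop :=
  forall x : vec, exists C, S C /\ C x.

End Fans.

(* Main.v *)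
Require Import Defs.
From HB Require Import structures.
From mathcomp Require Import all_boot all_order all_algebra.
From mathcomp Require Import classical_sets cardinality reals boolp.
From Stdlib Require Import ClassicalEpsilon.
Set Implicit Arguments. Unset Strict Implicit. Unset Printing Implicit Defensive.
Import Order.TTheory GRing.Theory Num.Theory.
Local Open Scope ring_scope.
Local Open Scope classical_set_scope.
From mathcomp Require Import lra zify.
From Stdlib Require Import Lia.

Lemma big_optionE (V : nmodType) (I : finType) (F : option I -> V) :
  \sum_(o : option I) F o = F None + \sum_(i : I) F (Some i).
Proof.
rewrite (bigD1 None) //=; congr (_ + _).
rewrite (reindex_omap Some id) //=; last by case.
by apply: eq_bigl => i; rewrite eqxx.
Qed.

Section A.
Variables (R : realType) (d : nat).
Local Notation vec := 'rV[R]_d.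

Lemma lattice_int (v : vec) : lattice_pt v ->
  exists n : 'I_d -> int, forall j, v 0 j = (n j)%:~R.
Proof. by move=> H; apply: (choice (fun j n => v 0 j = n%:~R)) => j; apply/intrP/H. Qed.

Lemma lattice_delta (j : 'I_d) : lattice_pt (delta_mx 0 j : vec).
Proof. by move=> k; rewrite mxE natr_int. Qed.

Lemma zb_dual (I : finType) (b : I -> vec) : Zbasis b ->
  exists c : 'I_d -> I -> int, forall j, delta_mx 0 j = \sum_i (c j i)%:~R *: b i.
Proof.
move=> [Hl [Hs Hu]].
apply: (choice (fun j c => delta_mx 0 j = \sum_i (c i)%:~R *: b i)) => j.
exact/Hs/lattice_delta.
Qed.

Lemma zb_span (I : finType) (b : I -> vec) : Zbasis b ->
  forall x : vec, exists lam : I -> R, x = \sum_i lam i *: b i.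
Proof.
move=> Hb x; have [c Hc] := zb_dual Hb.
exists (fun i => \sum_j x 0 j * (c j i)%:~R).
rewrite {1}(row_sum_delta x).
under eq_bigr => j _ do rewrite Hc scaler_sumr.
rewrite exchange_big /=; apply: eq_bigr => i _.
by rewrite scaler_suml; apply: eq_bigr => j _; rewrite scalerA.
Qed.

Lemma sum_delta_vec (I : finType) (b : I -> vec) (i : I) :
  \sum_k (i == k)%:R *: b k = b i.
Proof.
rewrite (bigD1 i) //= eqxx scale1r big1 ?addr0 // => k /negbTE.
by rewrite eq_sym => ->; rewrite scale0r.
Qed.

Lemma zb_indep (I : finType) (b : I -> vec) : Zbasis b ->
  forall lam : I -> R, \sum_i lam i *: b i = 0 -> forall i, lam i = 0.
Proof.
move=> Hb lam H0 k; have [c Hc] := zb_dual Hb.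
have [Hl [Hs Hu]] := Hb.
have [n Hn] : exists n : I -> 'I_d -> int, forall i j, b i 0 j = (n i j)%:~R.
  apply: (choice (fun i n => forall j, b i 0 j = (n j)%:~R)) => i.
  exact: lattice_int.
have key : forall i k, (\sum_j n i j * c j k)%R = (i == k)%:R.
  move=> i; apply: Hu.
  transitivity (b i); last first.
    by rewrite -{1}(sum_delta_vec b i); apply: eq_bigr => k0 _; case: (i == k0).
  under eq_bigr => k0 _ do rewrite rmorph_sum /= scaler_suml.
  rewrite exchange_big /= [RHS](row_sum_delta (b i)); apply: eq_bigr => j _.
  rewrite Hn Hc scaler_sumr; apply: eq_bigr => k0 _.
  by rewrite rmorphM /= scalerA.
have -> : lam k = \sum_i lam i * ((i == k)%:R : int)%:~R.
  rewrite (bigD1 k) //= eqxx mulr1 big1 ?addr0 // => i /negbTE ->.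
  by rewrite mulr0.
under eq_bigr => i _ do rewrite -key rmorph_sum /= mulr_sumr.
rewrite exchange_big /= big1 // => j _.
have : (\sum_i lam i *: b i) 0 j = 0 by rewrite H0 mxE.
rewrite summxE => Hj.
rewrite -[RHS](mul0r ((c j k)%:~R)) -[in RHS]Hj mulr_suml; apply: eq_bigr => i _.
by rewrite rmorphM /= mxE Hn mulrA.
Qed.

Definition coord (I : finType) (b : I -> vec) (x : vec) : I -> R :=
  epsilon (inhabits (fun _ => 0)) (fun lam => x = \sum_i lam i *: b i).

Lemma coordE (I : finType) (b : I -> vec) : Zbasis b -> forall x, x = \sum_i coord b x i *: b i.
Proof. by move=> Hb x; exact: (epsilon_spec _ _ (zb_span Hb x)). Qed.

Lemma coord_uniq (I : finType) (b : I -> vec) : Zbasis b ->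
  forall x (lam : I -> R), x = \sum_i lam i *: b i -> forall i, coord b x i = lam i.
Proof.
move=> Hb x lam Hx i; apply/eqP; rewrite -subr_eq0; apply/eqP.
apply: (zb_indep Hb (lam := fun i => coord b x i - lam i)).
under eq_bigr => k _ do rewrite scalerBl.
by rewrite sumrB -coordE // -Hx subrr.
Qed.

Lemma coord_lin (I : finType) (b : I -> vec) : Zbasis b ->
  forall (J : finType) (mu : J -> R) (y : J -> vec) i,
  coord b (\sum_k mu k *: y k) i = \sum_k mu k * coord b (y k) i.
Proof.
move=> Hb J mu y i.
apply: (coord_uniq Hb (lam := fun i => \sum_k mu k * coord b (y k) i)).
under [RHS]eq_bigr => i0 _ do rewrite scaler_suml.
rewrite exchange_big /=; apply: eq_bigr => k _.
by rewrite (coordE Hb (y k)) scaler_sumr; apply: eq_bigr => i0 _; rewrite scalerA -coordE.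
Qed.

Lemma coordD (I : finType) (b : I -> vec) : Zbasis b -> forall x y i,
  coord b (x + y) i = coord b x i + coord b y i.
Proof.
move=> Hb x y i; apply: (coord_uniq Hb (lam := fun i => coord b x i + coord b y i)).
by under eq_bigr => k _ do rewrite scalerDl; rewrite big_split /= -!coordE.
Qed.

Lemma coordZ (I : finType) (b : I -> vec) : Zbasis b -> forall a x i,
  coord b (a *: x) i = a * coord b x i.
Proof.
move=> Hb a x i; apply: (coord_uniq Hb (lam := fun i => a * coord b x i)).
by under eq_bigr => k _ do rewrite -scalerA; rewrite -scaler_sumr -coordE.
Qed.

Lemma coordN (I : finType) (b : I -> vec) : Zbasis b -> forall x i,
  coord b (- x) i = - coord b x i.
Proof. by move=> Hb x i; rewrite -scaleN1r coordZ // mulN1r. Qed.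

Lemma coordB (I : finType) (b : I -> vec) : Zbasis b -> forall x y i,
  coord b (x - y) i = coord b x i - coord b y i.
Proof. by move=> Hb x y i; rewrite coordD // coordN. Qed.

Lemma coord0 (I : finType) (b : I -> vec) : Zbasis b -> forall i, coord b 0 i = 0.
Proof.
move=> Hb i; apply: (coord_uniq Hb (lam := fun _ => 0)).
by rewrite big1 // => k _; rewrite scale0r.
Qed.

Lemma coord_basis (I : finType) (b : I -> vec) : Zbasis b -> forall j i,
  coord b (b j) i = (i == j)%:R.
Proof.
move=> Hb j i; apply: (coord_uniq Hb (lam := fun i => (i == j)%:R)).
by under eq_bigr => k _ do rewrite eq_sym; rewrite sum_delta_vec.
Qed.

Lemma coord_int (I : finType) (b : I -> vec) : Zbasis b -> forall x, lattice_pt x ->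
  forall i, coord b x i \is a Num.int.
Proof.
move=> Hb x Hx i; have [_ [Hs _]] := Hb.
have [c Hc] := Hs x Hx.
by rewrite (coord_uniq Hb Hc) intr_int.
Qed.

Lemma coneP (I : finType) (b : I -> vec) : Zbasis b -> forall x,
  cone b x <-> forall i, 0 <= coord b x i.
Proof.
move=> Hb x; split.
  by case=> lam [Hl Hx] i; rewrite (coord_uniq Hb Hx).
by move=> H; exists (coord b x); split => //; apply: coordE.
Qed.

Lemma cone_le1P (I : finType) (b : I -> vec) : Zbasis b -> forall x,
  cone_le1 b x <-> (forall i, 0 <= coord b x i) /\ \sum_i coord b x i <= 1.
Proof.
move=> Hb x; split.
  case=> lam [Hl Hs Hx].
  rewrite big_optionE scaler0 add0r in Hx.
  have Hc := coord_uniq Hb Hx.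
  split; first by move=> i; rewrite Hc.
  rewrite big_optionE in Hs.
  under eq_bigr => i _ do rewrite Hc.
  by rewrite -Hs lerDr.
move=> [H1 H2].
exists (fun o => match o with Some i => coord b x i | None => 1 - \sum_i coord b x i end).
split.
- by case=> [i|] //; rewrite subr_ge0.
- by rewrite big_optionE subrK.
- by rewrite big_optionE scaler0 add0r -coordE.
Qed.

End A.

Section B.
Variables (R : realType) (d : nat).
Local Notation vec := 'rV[R]_d.

Lemma dep_lemma (m n : nat) (y : 'I_m -> vec) (a : 'I_n -> vec) :
  (n < m)%N -> (forall l, exists mu : 'I_n -> R, y l = \sum_i mu i *: a i) ->
  ~ lin_indep y.
Proof.
move=> Hnm Hy Hind.
have [M HM] : exists M : 'I_m -> 'I_n -> R, forall l, y l = \sum_i M l i *: a i.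
  exact: (choice (fun l mu => y l = \sum_i mu i *: a i)).
pose Mx : 'M[R]_(m, n) := \matrix_(l, i) M l i.
have Hk : kermx Mx != 0.
  rewrite -mxrank_eq0 mxrank_ker subn_eq0 -ltnNge.
  exact: (leq_ltn_trans (rank_leq_col Mx) Hnm).
have [l0 Hl0] : exists l0, row l0 (kermx Mx) != 0.
  apply/existsP; move: Hk; apply: contraNT; rewrite negb_exists => /forallP H.
  by apply/eqP/row_matrixP => l; rewrite row0; apply/eqP; move: (H l); rewrite negbK.
pose c := row l0 (kermx Mx).
have Hc : c *m Mx = 0 by rewrite /c -row_mul mulmx_ker row0.
have : forall l, c 0 l = 0.
  apply: Hind.
  under eq_bigr => l _ do rewrite HM scaler_sumr.
  rewrite exchange_big /= big1 // => i _.
  have : (c *m Mx) 0 i = 0 by rewrite Hc mxE.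
  rewrite mxE => H.
  under eq_bigr => l _ do rewrite scalerA.
  rewrite -scaler_suml (_ : \sum_l _ = 0) ?scale0r //.
  rewrite -[RHS]H; apply: eq_bigr => l _; rewrite /Mx !mxE //.
move=> H; move/negP: Hl0; apply; apply/eqP/rowP => l.
by have := H l; rewrite /c mxE => ->; rewrite mxE.
Qed.

Lemma dim_le (m n : nat) (y : 'I_m -> vec) (a : 'I_n -> vec) :
  lin_indep y -> (forall l, exists mu : 'I_n -> R, y l = \sum_i mu i *: a i) ->
  (m <= n)%N.
Proof.
move=> Hi Hs; rewrite leqNgt; apply/negP => H.
exact: (dep_lemma H Hs Hi).
Qed.

Lemma delta_indep : lin_indep (fun j : 'I_d => (delta_mx 0 j : vec)).
Proof.
move=> c Hc j.
have : (\sum_i c i *: (delta_mx 0 i : vec)) 0 j = c j.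
  rewrite summxE (bigD1 j) //= !mxE !eqxx mulr1 big1 ?addr0 // => i Hi.
  by rewrite !mxE eq_sym (negbTE Hi) andbF mulr0.
by rewrite Hc mxE.
Qed.

Lemma zb_reindex (I J : finType) (b : I -> vec) (h : J -> I) :
  bijective h -> Zbasis b -> Zbasis (fun j => b (h j)).
Proof.
move=> hb [Hl [Hs Hu]]; split; first by move=> j; apply: Hl.
have [g hg gh] := hb.
split.
  move=> w /Hs [c ->]; exists (fun j => c (h j)).
  by rewrite (reindex h) //; apply: onW_bij.
move=> c c' H j.
have H2 : forall i, c (g i) = c' (g i).
  apply: Hu.
  rewrite (reindex h); last exact: onW_bij.
  rewrite [RHS](reindex h); last exact: onW_bij.
  by under eq_bigr => k _ do rewrite hg; under [RHS]eq_bigr => k _ do rewrite hg.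
by have := H2 (h j); rewrite hg.
Qed.

Lemma coord_reindex (I J : finType) (b : I -> vec) (h : J -> I) :
  bijective h -> Zbasis b -> forall x j, coord (fun j => b (h j)) x j = coord b x (h j).
Proof.
move=> hb Hb x j.
apply: (coord_uniq (zb_reindex hb Hb) (lam := fun j => coord b x (h j))).
by rewrite {1}(coordE Hb x) (reindex h) //; exact: onW_bij.
Qed.

Lemma cone_reindex (I J : finType) (b : I -> vec) (h : J -> I) :
  bijective h -> Zbasis b -> cone (fun j => b (h j)) = cone b.
Proof.
move=> hb Hb; have [g hg gh] := hb.
rewrite predeqE => x; rewrite (coneP (zb_reindex hb Hb)) (coneP Hb); split.
  by move=> H i; rewrite -(gh i) -coord_reindex.
by move=> H j; rewrite coord_reindex.
Qed.

Lemma cone_le1_reindex (I J : finType) (b : I -> vec) (h : J -> I) :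
  bijective h -> Zbasis b -> cone_le1 (fun j => b (h j)) = cone_le1 b.
Proof.
move=> hb Hb; have [g hg gh] := hb.
rewrite predeqE => x; rewrite (cone_le1P (zb_reindex hb Hb)) (cone_le1P Hb).
under eq_bigr => j _ do rewrite coord_reindex //.
rewrite -(reindex h (P := xpredT) (F := coord b x)); last exact: onW_bij.
split; move=> [H1 H2]; split => //.
  by move=> i; rewrite -(gh i) -coord_reindex.
by move=> j; rewrite coord_reindex.
Qed.

Lemma zb_indep' (k : nat) (b : 'I_k -> vec) : Zbasis b -> lin_indep b.
Proof. by move=> Hb c Hc; apply: (zb_indep Hb). Qed.

Lemma zb_card (I : finType) (b : I -> vec) : Zbasis b -> #|I| = d.
Proof.
move=> Hb.
pose y (l : 'I_#|I|) := b (enum_val l).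
have Hyb : Zbasis y by apply: zb_reindex => //; exact: enum_val_bij.
apply/eqP; rewrite eqn_leq; apply/andP; split.
  apply: (dim_le (zb_indep' Hyb) (a := fun j : 'I_d => (delta_mx 0 j : vec))).
  by move=> l; exists (fun j => y l 0 j); apply: row_sum_delta.
apply: (dim_le delta_indep (a := y)).
by move=> j; apply: zb_span.
Qed.

End B.

Section C.
Variables (R : realType) (d : nat).
Local Notation vec := 'rV[R]_d.

Lemma int_ge1 (x : R) : x \is a Num.int -> 0 < x -> 1 <= x.
Proof. by move=> /intrP [m ->]; rewrite ltr0z ler1z. Qed.

Lemma extreme_lemma (I J : finType) (b' : J -> vec) (a : I -> vec) (lam : I -> R) (j : J) :
  Zbasis b' -> (forall i, 0 <= lam i) -> b' j = \sum_i lam i *: a i ->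
  (forall i, 0 < lam i -> cone b' (a i)) ->
  exists i, 0 < lam i /\ exists c, 0 < c /\ a i = c *: b' j.
Proof.
move=> Hb' Hl Hj Hc.
have Hco : forall k, coord b' (b' j) k = \sum_i lam i * coord b' (a i) k.
  by move=> k; rewrite {1}Hj coord_lin.
have Hnn : forall i k, 0 <= lam i * coord b' (a i) k.
  move=> i k; have := Hl i; rewrite le0r => /orP [/eqP -> | Hp].
    by rewrite mul0r.
  by apply: mulr_ge0; [exact: ltW | exact: (proj1 (coneP Hb' _) (Hc i Hp))].
have Hz : forall k, k != j -> forall i, lam i * coord b' (a i) k = 0.
  move=> k Hk i.
  apply: (psumr_eq0P (P := xpredT) (F := fun i => lam i * coord b' (a i) k)) => //.
    by rewrite -Hco coord_basis // (negbTE Hk).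
have [i Hi] : exists i, lam i * coord b' (a i) j != 0.
  apply/existsP; rewrite -negb_forall; apply/negP => /forallP H.
  have : coord b' (b' j) j = 0.
    by rewrite Hco big1 // => i _; apply/eqP; move: (H i). 
  by rewrite coord_basis // eqxx => /eqP; rewrite oner_eq0.
have Hli : 0 < lam i.
  by rewrite lt0r (Hl i) andbT; apply: contraNN Hi => /eqP ->; rewrite mul0r.
exists i; split => //; exists (coord b' (a i) j); split.
  rewrite lt0r (proj1 (coneP Hb' _) (Hc i Hli) j) andbT.
  by apply: contraNN Hi => /eqP ->; rewrite mulr0.
rewrite {1}(coordE Hb' (a i)) (bigD1 j) //= big1 ?addr0 // => k Hk.
have := Hz k Hk i => /eqP; rewrite mulf_eq0 (gt_eqF Hli) /= => /eqP ->.
by rewrite scale0r.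
Qed.

Lemma prim_lemma (I J : finType) (b : I -> vec) (b' : J -> vec) i j c :
  Zbasis b -> Zbasis b' -> 0 < c -> b' j = c *: b i -> c = 1.
Proof.
move=> Hb Hb' Hc Hbc.
have Hb'l : lattice_pt (b' j) by case: Hb' => H _; apply: H.
have Hbl : lattice_pt (b i) by case: Hb => H _; apply: H.
have H1 : coord b (b' j) i = c by rewrite Hbc coordZ // coord_basis // eqxx mulr1.
have H2 : coord b' (b i) j = c^-1.
  have -> : b i = c^-1 *: b' j by rewrite Hbc scalerA mulVf ?scale1r // gt_eqF.
  by rewrite coordZ // coord_basis // eqxx mulr1.
have Hc1 : 1 <= c by rewrite -H1; apply: int_ge1; [exact: coord_int | rewrite H1].
have Hc2 : 1 <= c^-1.
  by rewrite -H2; apply: int_ge1; [exact: coord_int | rewrite H2 invr_gt0].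
apply/eqP; rewrite eq_le Hc1 andbT.
by have := ler_wpM2l (ltW Hc) Hc2; rewrite mulr1 mulfV ?gt_eqF.
Qed.

Lemma gen_match (I J : finType) (b : I -> vec) (b' : J -> vec) (lam : I -> R) j :
  Zbasis b -> Zbasis b' -> (forall i, 0 <= lam i) -> b' j = \sum_i lam i *: b i ->
  (forall i, 0 < lam i -> cone b' (b i)) -> exists i, 0 < lam i /\ b i = b' j.
Proof.
move=> Hb Hb' Hl Hj Hc.
have [i [Hi [c [Hc0 Hbi]]]] := extreme_lemma Hb' Hl Hj Hc.
exists i; split => //.
have Hc1 : c = 1.
  apply: (prim_lemma Hb' Hb Hc0 Hbi).
by rewrite Hbi Hc1 scale1r.
Qed.

End C.

Section D.
Variables (R : realType) (d : nat).
Local Notation vec := 'rV[R]_d.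

Lemma dotv_sum (I : finType) (w : vec) (lam : I -> R) (b : I -> vec) :
  dotv w (\sum_i lam i *: b i) = \sum_i lam i * dotv w (b i).
Proof.
rewrite /dotv.
under eq_bigr => k _ do rewrite summxE mulr_sumr.
rewrite exchange_big /=; apply: eq_bigr => i _.
by rewrite mulr_sumr; apply: eq_bigr => k _; rewrite mxE mulrCA.
Qed.

Lemma dotvD (w x y : vec) : dotv w (x + y) = dotv w x + dotv w y.
Proof. by rewrite /dotv -big_split /=; apply: eq_bigr => k _; rewrite mxE mulrDr. Qed.

Lemma dotvZ (w x : vec) a : dotv w (a *: x) = a * dotv w x.
Proof. by rewrite /dotv mulr_sumr; apply: eq_bigr => k _; rewrite mxE mulrCA. Qed.

Lemma dotv0 (w : vec) : dotv w 0 = 0.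
Proof. by rewrite /dotv big1 // => k _; rewrite mxE mulr0. Qed.

Lemma cone_basis (I : finType) (b : I -> vec) i : cone b (b i).
Proof.
exists (fun k => (k == i)%:R); split; first by move=> k; rewrite ler0n.
by under eq_bigr => k _ do rewrite eq_sym; rewrite sum_delta_vec.
Qed.

Lemma face_cone (I : finType) (b : I -> vec) F : Zbasis b -> face F (cone b) ->
  exists w : vec, (forall i, 0 <= dotv w (b i)) /\
   F = [set x | cone b x /\ forall i, 0 < dotv w (b i) -> coord b x i = 0].
Proof.
move=> Hb [w [Hw ->]]; exists w.
have Hwb : forall i, 0 <= dotv w (b i) by move=> i; apply/Hw/cone_basis.
split => //; rewrite predeqE => x /=; split.
  move=> [Hx Hx0]; split => // i Hi.
  have Hc := proj1 (coneP Hb x) Hx.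
  have : \sum_i coord b x i * dotv w (b i) = 0 by rewrite -dotv_sum -coordE.
  move/(psumr_eq0P (P := xpredT)) => H.
  have /eqP := H (fun i _ => mulr_ge0 (Hc i) (Hwb i)) i isT.
  by rewrite mulf_eq0 (gt_eqF Hi) orbF => /eqP.
move=> [Hx H]; split => //.
rewrite (coordE Hb x) dotv_sum big1 // => i _.
have := Hwb i; rewrite le0r => /orP [/eqP -> | /H ->]; by rewrite ?mulr0 ?mul0r.
Qed.

Lemma span_lift n (a : 'I_n -> vec) (j : 'I_n) (mu : 'I_n -> R) x :
  x = \sum_i mu i *: a i -> mu j = 0 ->
  x = \sum_(k < n.-1) mu (lift j k) *: a (lift j k).
Proof. by move=> -> Hj; rewrite (bigD1_ord j) //= Hj scale0r add0r. Qed.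

Lemma top_dim (b : 'I_d -> vec) : Zbasis b -> cone_dim (cone b) d.
Proof.
move=> Hb; split; first by exists b; split; [exact: cone_basis | exact: zb_indep'].
move=> [y [_ Hy]].
apply: (dep_lemma (a := fun j : 'I_d => (delta_mx 0 j : vec)) (leqnn d.+1) _ Hy).
by move=> l; exists (fun j => y l 0 j); apply: row_sum_delta.
Qed.

Lemma facet_index (b : 'I_d -> vec) F : (0 < d)%N -> Zbasis b -> face F (cone b) ->
  cone_dim F d.-1 -> exists j0, F = [set x | cone b x /\ coord b x j0 = 0].
Proof.
move=> d0 Hb HF [[y [HyF Hy]] Hnd].
have [w [Hwb HFe]] := face_cone Hb HF; subst F.
have [j0 Hj0] : exists j0, 0 < dotv w (b j0).
  case: (pselect (exists j0, 0 < dotv w (b j0))) => // Hno.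
  have H : forall k, ~~ (0 < dotv w (b k)).
    by move=> k; apply/negP => Hk; apply: Hno; exists k.
  exfalso; apply: Hnd; rewrite prednK //; exists b; split; last exact: zb_indep'.
  move=> i /=; split; first exact: cone_basis.
  by move=> k Hk; have := H k; rewrite Hk.
have Hun : forall i, 0 < dotv w (b i) -> i = j0.
  move=> i Hi; apply/eqP/negPn/negP => Hne.
  case: (unliftP i j0) => [i2|]; last by move=> E; rewrite E eqxx in Hne.
  move=> Ej0 {Hne}.
  have Hd1 : (0 < d.-1)%N by apply: (leq_ltn_trans (leq0n i2) (ltn_ord i2)).
  have Hm : (d.-1.-1 < d.-1)%N by rewrite ltn_predL.
  apply: (dep_lemma (a := fun k => b (lift i (lift i2 k))) Hm _ Hy) => l.
  exists (fun k => coord b (y l) (lift i (lift i2 k))).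
  have [Hyl Hyl0] := HyF l.
  apply: (span_lift (a := fun k => b (lift i k)) (mu := fun k => coord b (y l) (lift i k)) (j := i2)); last by rewrite /= -Ej0; apply: Hyl0.
  by apply: (span_lift (a := b) (mu := coord b (y l))); [exact: coordE | apply: Hyl0].
exists j0; rewrite predeqE => x /=; split.
  by move=> [Hx H]; split => //; apply: H.
move=> [Hx H]; split => // i Hi; by rewrite (Hun i Hi).
Qed.

Lemma dual_vec (I : finType) (b : I -> vec) (j : I) : Zbasis b ->
  exists w : vec, forall x, dotv w x = coord b x j.
Proof.
move=> Hb; exists (\row_k coord b (delta_mx 0 k) j) => x.
rewrite {2}(row_sum_delta x) coord_lin // /dotv; apply: eq_bigr => k _.
by rewrite mxE mulrC.
Qed.

Lemma facet_face (b : 'I_d -> vec) j0 : Zbasis b ->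
  face [set x | cone b x /\ coord b x j0 = 0] (cone b).
Proof.
move=> Hb; have [w Hw] := dual_vec j0 Hb; exists w; split.
  by move=> x /(coneP Hb) H; rewrite Hw.
by rewrite predeqE => x /=; rewrite Hw.
Qed.

Lemma facet_dim (b : 'I_d -> vec) j0 : Zbasis b ->
  cone_dim [set x | cone b x /\ coord b x j0 = 0] d.-1.
Proof.
move=> Hb; split.
  exists (fun k => b (lift j0 k)); split.
    move=> k; split; first exact: cone_basis.
    by rewrite coord_basis // (negbTE (neq_lift _ _)).
  move=> c Hc k.
  have := coord_lin Hb c (fun k => b (lift j0 k)) (lift j0 k).
  rewrite Hc coord0 // (bigD1 k) //= coord_basis // eqxx mulr1 big1 ?addr0.
    by move->.
  by move=> i Hi; rewrite coord_basis // (inj_eq lift_inj) eq_sym (negbTE Hi) mulr0.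
move=> [y [HyF Hy]].
apply: (dep_lemma (a := fun k => b (lift j0 k)) (ltnSn _) _ Hy).
move=> l; exists (fun k => coord b (y l) (lift j0 k)).
have [_ H0] := HyF l.
by apply: span_lift => //; exact: coordE.
Qed.

End D.

Section E.
Variables (R : realType) (d : nat).
Local Notation vec := 'rV[R]_d.

Definition hj (j0 : 'I_d) (o : option 'I_d.-1) : 'I_d :=
  match o with Some i => lift j0 i | None => j0 end.

Lemma hj_bij (j0 : 'I_d) : bijective (hj j0).
Proof.
exists (unlift j0).
  by case=> [i|] /=; rewrite ?liftK ?unlift_none.
by move=> i; case: unliftP.
Qed.

Lemma ext_hj (b : 'I_d -> vec) j0 :
  ext (fun i => b (lift j0 i)) (b j0) = (fun o => b (hj j0 o)).
Proof. by apply: funext; case. Qed.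

Lemma zb_inj (I : finType) (b : I -> vec) : Zbasis b -> injective b.
Proof.
move=> Hb i j Hij; have := coord_basis Hb i j; rewrite Hij coord_basis // eqxx.
by move/esym/eqP; rewrite pnatr_eq1 eqb1 => /eqP.
Qed.

Lemma ext_repr (b : 'I_d -> vec) j0 : Zbasis b ->
  [/\ Zbasis (ext (fun i => b (lift j0 i)) (b j0)),
      cone b = cone (ext (fun i => b (lift j0 i)) (b j0)) &
      cone_le1 b = cone_le1 (ext (fun i => b (lift j0 i)) (b j0))].
Proof.
move=> Hb; rewrite ext_hj; split.
- exact: zb_reindex (hj_bij j0) Hb.
- by rewrite cone_reindex //; exact: hj_bij.
- by rewrite cone_le1_reindex //; exact: hj_bij.
Qed.

Lemma facet_repr (b b' : 'I_d -> vec) j0 : (0 < d)%N -> Zbasis b -> Zbasis b' ->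
  face [set x | cone b x /\ coord b x j0 = 0] (cone b') ->
  exists q, [/\ Zbasis (ext (fun i => b (lift j0 i)) (b' q)),
      cone b' = cone (ext (fun i => b (lift j0 i)) (b' q)) &
      cone_le1 b' = cone_le1 (ext (fun i => b (lift j0 i)) (b' q))].
Proof.
move=> d0 Hb Hb' HF.
have [w [Hwb HFe]] := face_cone Hb' HF.
have HFd := facet_dim j0 Hb.
rewrite HFe in HFd.
have HF2 : forall x, cone b x /\ coord b x j0 = 0 <->
     cone b' x /\ (forall j, 0 < dotv w (b' j) -> coord b' x j = 0).
  by move=> x; move: HFe; rewrite predeqE => /(_ x).
have [q Hq] : exists q, 0 < dotv w (b' q).
  case: (pselect (exists q, 0 < dotv w (b' q))) => // Hno.
  exfalso; case: HFd => _; apply; rewrite prednK //; exists b'; split; last exact: zb_indep'.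
  move=> i /=; split; first exact: cone_basis.
  by move=> j Hj; exfalso; apply: Hno; exists j.
have Hg : forall i : 'I_d.-1, exists j, j != q /\ b' j = b (lift j0 i).
  move=> i.
  have Hbi : cone b' (b (lift j0 i)) /\
      (forall j, 0 < dotv w (b' j) -> coord b' (b (lift j0 i)) j = 0).
    apply/HF2; split; first exact: cone_basis.
    by rewrite coord_basis // (negbTE (neq_lift _ _)).
  have Hlam := proj1 (coneP Hb' _) (proj1 Hbi).
  have Hcond : forall j, 0 < coord b' (b (lift j0 i)) j -> cone b (b' j).
    move=> j Hj.
    have Hw0 : dotv w (b' j) = 0.
      apply/eqP; rewrite eq_le Hwb andbT; rewrite leNgt; apply/negP => Hp.
      by rewrite (proj2 Hbi j Hp) ltxx in Hj.
    have : cone b (b' j) /\ coord b (b' j) j0 = 0.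
      apply/HF2; split; first exact: cone_basis.
      move=> j' Hj'; rewrite coord_basis //.
      by case: eqP => // E; rewrite E Hw0 ltxx in Hj'.
    by case.
  have [j [Hj Heq]] := gen_match (b := b') (b' := b) (j := lift j0 i) Hb' Hb Hlam
     (coordE Hb' _) Hcond.
  exists j; split => //.
  by apply: contraTneq Hj => ->; rewrite (proj2 Hbi q Hq) ltxx.
have [g Hgq] := choice (fun i j => j != q /\ b' j = b (lift j0 i)) Hg.
pose h (o : option 'I_d.-1) : 'I_d := match o with Some i => g i | None => q end.
have hinj : injective h.
  have ginj : injective g.
    move=> i1 i2 E; apply: (@lift_inj _ j0); apply: (zb_inj Hb).
    by rewrite -(proj2 (Hgq i1)) -(proj2 (Hgq i2)) E.
  case=> [i1|] [i2|] //= E.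
  - by rewrite (ginj _ _ E).
  - by move: (proj1 (Hgq i1)); rewrite E eqxx.
  - by move: (proj1 (Hgq i2)); rewrite E eqxx.
have hb : bijective h.
  by apply: inj_card_bij => //; rewrite card_option !card_ord prednK.
have He : ext (fun i => b (lift j0 i)) (b' q) = (fun o => b' (h o)).
  by apply: funext; case => //= i; rewrite (proj2 (Hgq i)).
exists q; rewrite He; split.
- exact: zb_reindex.
- by rewrite cone_reindex.
- by rewrite cone_le1_reindex.
Qed.

End E.

Section F.
Variables (R : realType) (d : nat).
Local Notation vec := 'rV[R]_d.

Lemma coord_ext_u k (u : 'I_k -> vec) v i o : Zbasis (ext u v) ->
  coord (ext u v) (u i) o = (o == Some i)%:R.
Proof. by move=> Hb; rewrite -[u i]/(ext u v (Some i)) coord_basis. Qed.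

Lemma coord_ext_v' k (u : 'I_k -> vec) v v' (c : 'I_k -> R) : Zbasis (ext u v) ->
  v + v' = \sum_i c i *: u i ->
  coord (ext u v) v' None = -1 /\ forall j, coord (ext u v) v' (Some j) = c j.
Proof.
move=> Hb Hc.
have H := coord_uniq Hb (x := v')
  (lam := fun o => match o with None => -1 | Some j => c j end).
split; [apply: H | move=> j; apply: H];
  by rewrite big_optionE /= -Hc scaleN1r addKr.
Qed.

Lemma cone_le1_convex (I : finType) (b : I -> vec) : Zbasis b -> convex (cone_le1 b).
Proof.
move=> Hb x y t /(cone_le1P Hb) [Hx1 Hx2] /(cone_le1P Hb) [Hy1 Hy2] t0 t1.
apply/(cone_le1P Hb); split.
  move=> i; rewrite coordD // !coordZ //.
  by apply: addr_ge0; apply: mulr_ge0 => //; rewrite subr_ge0.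
under eq_bigr => i _ do rewrite coordD // !coordZ //.
rewrite big_split /= -!mulr_sumr.
set A := \sum_i _ in Hx2 *; set B := \sum_i _ in Hy2 *.
nra.
Qed.

Lemma half_convex k (u : 'I_k -> vec) v v' (mu : 'I_k -> R) x y t :
  Zbasis (ext u v) -> Zbasis (ext u v') -> (forall i, 0 <= mu i) -> \sum_i mu i <= 1 ->
  v + v' = \sum_i (2 * mu i) *: u i ->
  cone_le1 (ext u v) x -> cone_le1 (ext u v') y -> 0 <= t -> t <= 1 ->
  0 <= (1 - t) * coord (ext u v) x None - t * coord (ext u v') y None ->
  cone_le1 (ext u v) ((1 - t) *: x + t *: y).
Proof.
move=> Hb Hb' Hmu HM Hvv Hx Hy t0 t1 Hz.
set e := ext u v in Hb Hx Hz *; set e' := ext u v' in Hb' Hy Hz *.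
have [Hv'N Hv'S] := coord_ext_v' Hb Hvv.
have Hcy : forall o, coord e y o = match o with
    None => - coord e' y None
  | Some j => coord e' y (Some j) + 2 * mu j * coord e' y None end.
  move=> o; rewrite {1}(coordE Hb' y) coord_lin // big_optionE /=.
  rewrite [coord e v' o]/= .
  case: o => [j|].
    rewrite Hv'S (bigD1 j) //= coord_ext_u // eqxx mulr1 big1 ?addr0.
      by rewrite addrC mulrC.
    move=> i Hi; rewrite coord_ext_u //.
    by case: eqP => [[E]|_]; [rewrite E eqxx in Hi | rewrite mulr0].
  rewrite Hv'N big1 ?addr0; first by rewrite mulrN1.
  by move=> i _; rewrite coord_ext_u // mulr0.
have [Hx1 Hx2] := proj1 (cone_le1P Hb x) Hx.
have [Hy1 Hy2] := proj1 (cone_le1P Hb' y) Hy.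
apply/(cone_le1P Hb); split.
  move=> o; rewrite coordD // !coordZ // Hcy.
  case: o => [j|] //; first last.
    by rewrite mulrN.
  apply: addr_ge0; apply: mulr_ge0 => //; first by rewrite subr_ge0.
  by apply: addr_ge0 => //; apply: mulr_ge0 => //; apply: mulr_ge0.
under eq_bigr => o _ do rewrite coordD // !coordZ // Hcy.
rewrite big_optionE /= big_split /= -!mulr_sumr.
rewrite big_optionE in Hx2; rewrite big_optionE in Hy2.
rewrite big_split /= -mulr_suml -mulr_sumr.
have HyN := Hy1 None; have HxN := Hx1 None.
set a0 := coord e x None in Hx2 HxN Hz *.
set b0 := coord e' y None in Hy2 HyN Hz *.
set A := \sum_i coord e x (Some i) in Hx2 *.
set B := \sum_i coord e' y (Some i) in Hy2 *.
set M := \sum_i mu i in HM *.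
have HM0 : 0 <= M by apply: sumr_ge0 => i _.
have HA : 0 <= A by apply: sumr_ge0 => i _.
have HB : 0 <= B by apply: sumr_ge0 => i _.
have HP : b0 * M <= b0 by rewrite -{2}[b0]mulr1; apply: ler_wpM2l.
nra.
Qed.

End F.

Lemma int_unit (m1 m2 : int) : (m1 * m2 = 1)%R -> (m1 = 1 /\ m2 = 1) \/ (m1 = -1 /\ m2 = -1).
Proof.
move=> H.
have : (m1 <= -1 \/ m1 = 0 \/ 1 <= m1)%R by lia.
case=> [H1|[H1|H1]].
- have : (m2 <= -1 \/ m2 = 0 \/ 1 <= m2)%R by lia.
  case=> [H2|[H2|H2]]; [nia | subst; lia | nia].
- subst; lia.
- have : (m2 <= -1 \/ m2 = 0 \/ 1 <= m2)%R by lia.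
  case=> [H2|[H2|H2]]; [nia | subst; lia | nia].
Qed.

Section G.
Variables (R : realType) (d : nat).
Local Notation vec := 'rV[R]_d.

Lemma union_convex k (u : 'I_k -> vec) v v' (mu : 'I_k -> R) :
  Zbasis (ext u v) -> Zbasis (ext u v') -> (forall i, 0 <= mu i) -> \sum_i mu i <= 1 ->
  v + v' = \sum_i (2 * mu i) *: u i ->
  convex (cone_le1 (ext u v) `|` cone_le1 (ext u v')).
Proof.
move=> Hb Hb' Hmu HM Hvv.
have Hvv' : v' + v = \sum_i (2 * mu i) *: u i by rewrite addrC.
have swap : forall (x y : vec) t, (1 - t) *: x + t *: y = (1 - (1 - t)) *: y + (1 - t) *: x.
  move=> x y t; have -> : 1 - (1 - t) = t by lra.
  by rewrite addrC.
move=> x y t [Hx|Hx] [Hy|Hy] t0 t1.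
- by left; apply: cone_le1_convex.
- case: (lerP 0 ((1 - t) * coord (ext u v) x None - t * coord (ext u v') y None)) => H.
    by left; apply: (half_convex Hb Hb' Hmu HM Hvv Hx Hy t0 t1 H).
  right; rewrite swap; apply: (half_convex Hb' Hb Hmu HM Hvv' Hy Hx); [lra | lra | nra].
- case: (lerP 0 ((1 - t) * coord (ext u v') x None - t * coord (ext u v) y None)) => H.
    by right; apply: (half_convex Hb' Hb Hmu HM Hvv' Hx Hy t0 t1 H).
  left; rewrite swap; apply: (half_convex Hb Hb' Hmu HM Hvv Hy Hx); [lra | lra | nra].
- by right; apply: cone_le1_convex.
Qed.

Lemma small_comb k (u : 'I_k -> vec) (n : 'I_k -> R) w :
  (forall i, n i \is a Num.int) -> (forall i, 0 <= n i) -> \sum_i n i <= 2 ->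
  w = \sum_i n i *: u i ->
  [\/ w = 0, exists i, w = u i | exists i j, w = u i + u j].
Proof.
move=> Hint Hn Hs ->.
case: (pselect (exists i, n i != 0)) => [[i Hi]|Hno]; last first.
  constructor 1; apply: big1 => i _.
  have -> : n i = 0 by apply/eqP; apply/negPn/negP => H; apply: Hno; exists i.
  by rewrite scale0r.
have Hi1 : 1 <= n i by apply: int_ge1; rewrite // lt0r Hi Hn.
rewrite (bigD1 i) //= in Hs; rewrite (bigD1 i) //=.
case: (pselect (exists j, j != i /\ n j != 0)) => [[j [Hji Hj]]|Hno2].
  have Hj1 : 1 <= n j by apply: int_ge1; rewrite // lt0r Hj Hn.
  rewrite (bigD1 j) //= in Hs; rewrite (bigD1 j) //=.
  set S := \sum_(l | (l != i) && (l != j)) n l in Hs.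
  have HS0 : 0 <= S by apply: sumr_ge0 => l _.
  have HS : S = 0 by lra.
  have Hz := psumr_eq0P (fun l _ => Hn l) HS.
  rewrite big1; last by move=> l Hl; rewrite Hz // scale0r.
  have -> : n i = 1 by lra.
  have -> : n j = 1 by lra.
  by constructor 3; exists i, j; rewrite !scale1r addr0.
have Hz : forall l, l != i -> n l = 0.
  by move=> l Hl; apply/eqP; apply/negPn/negP => H; apply: Hno2; exists l.
rewrite big1; last by move=> l /Hz ->; rewrite scale0r.
rewrite big1 in Hs; last by move=> l /Hz.
have [m Hm] := intrP (Hint i).
have : m = 1 \/ m = 2.
  have h1 : (1 <= m)%R by rewrite -(ler1z R) -Hm.
  have h2 : (m <= 2)%R by rewrite -(ler_int R) -Hm; rewrite addr0 in Hs.
  lia.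
case=> E; rewrite Hm E addr0.
  by constructor 2; exists i; rewrite scale1r.
by constructor 3; exists i, i; rewrite scaler_nat mulr2n.
Qed.

Lemma basis_le1 (I : finType) (b : I -> vec) i : Zbasis b -> cone_le1 b (b i).
Proof.
move=> Hb; apply/(cone_le1P Hb); split.
  by move=> j; rewrite coord_basis // ler0n.
by rewrite (bigD1 i) //= coord_basis // eqxx big1 ?addr0 // => j /negbTE Hj; rewrite coord_basis // Hj.
Qed.

Lemma cond_half k (u : 'I_k -> vec) v v' :
  Zbasis (ext u v) -> Zbasis (ext u v') -> v <> v' ->
  cone_le1 (ext u v) ((1 - 2^-1) *: v + 2^-1 *: v') ->
  [\/ v + v' = 0, exists i, v + v' = u i | exists i j, v + v' = u i + u j].
Proof.
move=> Hb Hb' Hne Hm.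
set e := ext u v in Hb Hm; set e' := ext u v' in Hb'.
have Hl' : lattice_pt v' by case: Hb' => H _; apply: (H None).
have Hl : lattice_pt v by case: Hb => H _; apply: (H None).
set c := coord e v'.
have Hprod : coord e' v None * c None = 1.
  have : coord e v None = 1 by rewrite -[v]/(e None) coord_basis // eqxx.
  rewrite {1}(coordE Hb' v) coord_lin // big_optionE /= big1 ?addr0 //.
  by move=> i _; rewrite coord_ext_u // mulr0.
have [m1 Hm1] := intrP (coord_int Hb Hl' None).
have [m2 Hm2] := intrP (coord_int Hb' Hl None).
have HcN : c None = 1 \/ c None = -1.
  rewrite /c Hm1; rewrite /c Hm1 Hm2 -intrM in Hprod.
  have : (m2 * m1 = 1)%R by apply/eqP; rewrite -(eqr_int R) Hprod.
  by case/int_unit => [[_ ->]|[_ ->]]; [left | right].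
have Hv' : v' = c None *: v + \sum_i c (Some i) *: u i.
  by rewrite {1}(coordE Hb v') big_optionE.
have Hcm : forall o, coord e ((1 - 2^-1) *: v + 2^-1 *: v') o
             = 2^-1 * (o == None)%:R + 2^-1 * c o.
  move=> o; rewrite coordD // !coordZ // -[v]/(e None) coord_basis //.
  by congr (_ * _ + _); lra.
have [Hm1' Hm2'] := proj1 (cone_le1P Hb _) Hm.
have Hci : forall i, 0 <= c (Some i).
  move=> i; have := Hm1' (Some i); rewrite Hcm /= mulr0 add0r.
  by rewrite pmulr_rge0 // invr_gt0 ltr0n.
move: Hm2'; rewrite big_optionE Hcm /=.
under eq_bigr => i _ do rewrite Hcm /= mulr0 add0r.
rewrite -mulr_sumr mulr1 => Hsum.
have Hs0 : 0 <= \sum_i c (Some i) by apply: sumr_ge0.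
case: HcN => HcN; rewrite HcN in Hsum Hv'.
  exfalso; apply: Hne.
  have HS : \sum_i c (Some i) = 0 by lra.
  have Hz := psumr_eq0P (fun i _ => Hci i) HS.
  by rewrite Hv' scale1r big1 ?addr0 // => i _; rewrite Hz // scale0r.
apply: (small_comb (n := fun i => c (Some i))) => //.
- by move=> i; apply: coord_int.
- lra.
- by rewrite Hv' scaleN1r addNKr.
Qed.

Lemma cond_from_convex k (u : 'I_k -> vec) v v' :
  Zbasis (ext u v) -> Zbasis (ext u v') -> v <> v' ->
  convex (cone_le1 (ext u v) `|` cone_le1 (ext u v')) ->
  [\/ v + v' = 0, exists i, v + v' = u i | exists i j, v + v' = u i + u j].
Proof.
move=> Hb Hb' Hne Hc.
have := Hc v v' 2^-1 (or_introl (basis_le1 None Hb)) (or_intror (basis_le1 None Hb')).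
have h0 : (0 : R) <= 2^-1 by rewrite invr_ge0 ler0n.
have h1 : (2^-1 : R) <= 1 by rewrite invf_le1 ?ler1n // ltr0n.
case/(_ h0 h1) => Hm; first exact: cond_half.
rewrite addrC; apply: (cond_half Hb' Hb) => //; first by move=> E; apply: Hne.
have -> : (1 - 2^-1 : R) = 2^-1 by lra.
by rewrite addrC; move: Hm; have -> : (1 - 2^-1 : R) = 2^-1 by lra.
Qed.

End G.

Section H.
Variables (R : realType) (d : nat).
Local Notation vec := 'rV[R]_d.

Lemma cone_d0 (b b' : 'I_d -> vec) : d = 0%N -> cone b = cone b'.
Proof.
move=> Hd.
have Hs : forall (F : 'I_d -> vec), \sum_i F i = 0.
  by move=> F; apply: big1 => j _; exfalso; have := ltn_ord j; rewrite {2}Hd.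
have Hall : forall (c : 'I_d -> vec), cone c = setT.
  move=> c; rewrite predeqE => x; split => // _.
  exists (fun _ => 0); split => //.
  by rewrite Hs (row_sum_delta x) Hs.
by rewrite !Hall.
Qed.

Lemma disj_mu k (u : 'I_k -> vec) w :
  [\/ w = 0, exists i, w = u i | exists i j, w = u i + u j] ->
  exists mu : 'I_k -> R, [/\ forall i, 0 <= mu i, \sum_i mu i <= 1 &
     w = \sum_i (2 * mu i) *: u i].
Proof.
have key : forall n : 'I_k -> R, (forall i, 0 <= n i) -> \sum_i n i <= 2 ->
    w = \sum_i n i *: u i -> exists mu : 'I_k -> R, [/\ forall i, 0 <= mu i,
     \sum_i mu i <= 1 & w = \sum_i (2 * mu i) *: u i].
  move=> n Hn Hs Hw; exists (fun i => 2^-1 * n i); split.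
  - by move=> i; rewrite mulr_ge0 // invr_ge0 ler0n.
  - by rewrite -mulr_sumr; lra.
  - by rewrite Hw; apply: eq_bigr => i _; rewrite mulrA mulfV ?mul1r // pnatr_eq0.
case.
- move=> Hw; apply: (key (fun _ => 0)) => //.
    by rewrite big1 // ler0n.
  by rewrite Hw big1 // => i _; rewrite scale0r.
- case=> i Hw; apply: (key (fun l => (l == i)%:R)).
  + by move=> l; rewrite ler0n.
  + rewrite (bigD1 i) //= eqxx big1 ?addr0 ?ler1n // => l /negbTE ->; done.
  + by rewrite Hw; under eq_bigr => l _ do rewrite eq_sym; rewrite sum_delta_vec.
- case=> i [j Hw]; apply: (key (fun l => (l == i)%:R + (l == j)%:R)).
  + by move=> l; rewrite addr_ge0 ?ler0n.
  + rewrite big_split /=.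
    have E : forall i0 : 'I_k, \sum_l (l == i0)%:R = 1 :> R.
      move=> i0; rewrite (bigD1 i0) //= eqxx big1 ?addr0 // => l /negbTE ->; done.
    by rewrite !E; lra.
  + rewrite Hw; under eq_bigr => l _ do rewrite scalerDl.
    rewrite big_split /=.
    have E : forall i0 : 'I_k, \sum_l (l == i0)%:R *: u l = u i0.
      by move=> i0; under eq_bigr => l _ do rewrite eq_sym; rewrite sum_delta_vec.
    by rewrite !E.
Qed.

Lemma adj_data (S : set (set vec)) s t (b b' : 'I_d -> vec) :
  adjacent S s t -> Zbasis b -> Zbasis b' -> s = cone b -> t = cone b' ->
  (0 < d)%N /\ exists j0 q,
    [/\ adj_repr s t (fun i => b (lift j0 i)) (b j0) (b' q),
        cone_le1 b = cone_le1 (ext (fun i => b (lift j0 i)) (b j0)) &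
        cone_le1 b' = cone_le1 (ext (fun i => b (lift j0 i)) (b' q))].
Proof.
move=> [Hs Ht Hne [F [HFs HFt HFd]]] Hb Hb' Es Et.
have d0 : (0 < d)%N.
  case: (posnP d) => // Hd; exfalso; apply: Hne; rewrite Es Et; exact: cone_d0.
split => //.
rewrite Es in HFs; rewrite Et in HFt.
have [j0 EF] := facet_index d0 Hb HFs HFd.
rewrite EF in HFt.
have [q [Hq1 Hq2 Hq3]] := facet_repr d0 Hb Hb' HFt.
have [Hp1 Hp2 Hp3] := ext_repr j0 Hb.
exists j0, q; split => //.
by split => //; rewrite ?Es ?Et.
Qed.

Theorem part1 (S : set (set vec)) :
  (pairwise_convex S <->
   (forall s t, adjacent S s t ->
      forall b b' : 'I_d -> vec, Zbasis b -> Zbasis b' ->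
      s = cone b -> t = cone b' -> convex (cone_le1 b `|` cone_le1 b'))).
Proof.
split.
  move=> Hpc s t Hadj b b' Hb Hb' Es Et.
  have [d0 [j0 [q [Hrep E1 E2]]]] := adj_data Hadj Hb Hb' Es Et.
  have [mu [Hmu1 Hmu2 Hmu3]] := disj_mu (Hpc s t Hadj _ _ _ _ Hrep).
  rewrite E1 E2.
  case: Hrep => Hz1 Hz2 _ _.
  exact: (union_convex Hz1 Hz2 Hmu1 Hmu2 Hmu3).
move=> Hb s t Hadj k u v v' [Hz1 Hz2 Es Et].
have Ecard : d = #|{: option 'I_k}| by rewrite (zb_card Hz1).
pose h : 'I_d -> option 'I_k := enum_val \o cast_ord Ecard.
have hb : bijective h.
  apply: bij_comp; first exact: enum_val_bij.
  by exists (cast_ord (esym Ecard)); [exact: cast_ordK | exact: cast_ordKV].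
have := Hb s t Hadj (fun j => ext u v (h j)) (fun j => ext u v' (h j))
   (zb_reindex hb Hz1) (zb_reindex hb Hz2).
rewrite !cone_reindex // !cone_le1_reindex // => /(_ Es Et) Hconv.
apply: cond_from_convex => // Evv.
case: Hadj => _ _ Hne _; apply: Hne; by rewrite Es Et Evv.
Qed.

End H.

Section I.
Variables (R : realType) (d : nat).
Local Notation vec := 'rV[R]_d.

Definition ht (I : finType) (b : I -> vec) (x : vec) := \sum_i coord b x i.

Lemma ht_lin (I J : finType) (b : I -> vec) (lam : J -> R) (y : J -> vec) : Zbasis b ->
  ht b (\sum_j lam j *: y j) = \sum_j lam j * ht b (y j).
Proof.
move=> Hb; rewrite /ht.
under eq_bigr => i _ do rewrite coord_lin //.
by rewrite exchange_big /=; apply: eq_bigr => j _; rewrite mulr_sumr.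
Qed.

Lemma ht_basis (I : finType) (b : I -> vec) i : Zbasis b -> ht b (b i) = 1.
Proof.
move=> Hb; rewrite /ht (bigD1 i) //= coord_basis // eqxx big1 ?addr0 //.
by move=> j /negbTE Hj; rewrite coord_basis // Hj.
Qed.

Lemma ht_same (I J : finType) (b : I -> vec) (c : J -> vec) :
  Zbasis b -> Zbasis c -> cone b = cone c -> forall x, ht b x = ht c x.
Proof.
move=> Hb Hc E x.
have H1 : forall i, ht c (b i) = 1.
  move=> i.
  have Hbi : cone c (b i) by rewrite -E; apply: cone_basis.
  have [j [_ Hj]] := gen_match (b := c) (b' := b) (j := i) Hc Hb
     (proj1 (coneP Hc _) Hbi) (coordE Hc _)
     (fun j _ => eq_ind _ (fun A => A (c j)) (cone_basis c j) _ (esym E)).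
  by rewrite -Hj ht_basis.
rewrite [in RHS](coordE Hb x) ht_lin //.
by under [RHS]eq_bigr => i _ do rewrite H1 mulr1.
Qed.

Lemma le1_cone (I : finType) (b : I -> vec) x : Zbasis b -> cone_le1 b x -> cone b x.
Proof. by move=> Hb /(cone_le1P Hb) [H _]; apply/(coneP Hb). Qed.

Lemma height_eq (I J : finType) (S : set (set vec)) (C C' : set vec)
  (b : I -> vec) (b' : J -> vec) x :
  fan S -> S C -> S C' -> Zbasis b -> Zbasis b' -> C = cone b -> C' = cone b' ->
  C x -> C' x -> ht b x = ht b' x.
Proof.
move=> [_ _ Hint] HC HC' Hb Hb' EC EC' Hx Hx'.
have [HF1 HF2] := Hint C C' HC HC'.
have HF1' : face (C `&` C') (cone b) by rewrite -EC.
have HF2' : face (C `&` C') (cone b') by rewrite -EC'.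
have [w1 [Hw1 E1]] := face_cone Hb HF1'.
have [w2 [Hw2 E2]] := face_cone Hb' HF2'.
have M1 : forall y, (C `&` C') y <-> cone b y /\
    (forall i, 0 < dotv w1 (b i) -> coord b y i = 0) by move=> y; rewrite E1.
have M2 : forall y, (C `&` C') y <-> cone b' y /\
    (forall j, 0 < dotv w2 (b' j) -> coord b' y j = 0) by move=> y; rewrite E2.
have Hxx : (C `&` C') x by split.
have key : forall j, 0 < coord b' x j -> ht b (b' j) = 1.
  move=> j Hj.
  have Hw2j : dotv w2 (b' j) = 0.
    apply/eqP; rewrite eq_le Hw2 andbT leNgt; apply/negP => Hp.
    by rewrite (proj2 (proj1 (M2 x) Hxx) j Hp) ltxx in Hj.
  have Hbj : (C `&` C') (b' j).
    apply/M2; split; first exact: cone_basis.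
    move=> j' Hj'; rewrite coord_basis //.
    by case: eqP => // E; rewrite E Hw2j ltxx in Hj'.
  have [Hbj1 Hbj2] := proj1 (M1 _) Hbj.
  have Hcond : forall i, 0 < coord b (b' j) i -> cone b' (b i).
    move=> i Hi.
    have Hw1i : dotv w1 (b i) = 0.
      apply/eqP; rewrite eq_le Hw1 andbT leNgt; apply/negP => Hp.
      by rewrite (Hbj2 i Hp) ltxx in Hi.
    have : (C `&` C') (b i).
      apply/M1; split; first exact: cone_basis.
      move=> i' Hi'; rewrite coord_basis //.
      by case: eqP => // E; rewrite E Hw1i ltxx in Hi'.
    by case=> _; rewrite EC'.
  have [i [_ Hi]] := gen_match (b := b) (b' := b') (j := j) Hb Hb'
     (proj1 (coneP Hb _) Hbj1) (coordE Hb _) Hcond.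
  by rewrite -Hi ht_basis.
have Hx'c := proj1 (coneP Hb' x) (eq_ind _ (fun A => A x) Hx' _ EC').
rewrite [in LHS](coordE Hb' x) ht_lin // [RHS]/ht; apply: eq_bigr => j _.
have := Hx'c j; rewrite le0r => /orP [/eqP -> | Hp]; first by rewrite mul0r.
by rewrite key // mulr1.
Qed.

Lemma P_cap (I J : finType) (S : set (set vec)) (C C' : set vec)
  (b : I -> vec) (b' : J -> vec) x :
  fan S -> S C -> S C' -> Zbasis b -> Zbasis b' -> C = cone b -> C' = cone b' ->
  C x -> cone_le1 b' x -> cone_le1 b x.
Proof.
move=> HS HC HC' Hb Hb' EC EC' Hx Hx1.
have Hx' : C' x by rewrite EC'; apply: le1_cone.
have Eh := height_eq HS HC HC' Hb Hb' EC EC' Hx Hx'.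
apply/(cone_le1P Hb); split.
  by apply/(coneP Hb); rewrite -EC.
by rewrite -/(ht b x) Eh; case: (proj1 (cone_le1P Hb' x) Hx1).
Qed.

Lemma pc_positive (S : set (set vec)) : pairwise_convex S -> pairwise_positive S.
Proof.
move=> Hpc s t Hadj k u v v' Hrep.
case: (Hpc s t Hadj k u v v' Hrep).
- move=> ->; exists (fun _ => 0); split => //.
  by rewrite big1 // => i _; rewrite scale0r.
- by case=> i ->; apply: cone_basis.
- case=> i [j ->]; exists (fun l => (l == i)%:R + (l == j)%:R); split.
    by move=> l; rewrite addr_ge0 ?ler0n.
  under eq_bigr => l _ do rewrite scalerDl.
  rewrite big_split /=.
  have E : forall i0 : 'I_k, \sum_l (l == i0)%:R *: u l = u i0.
    by move=> i0; under eq_bigr => l _ do rewrite eq_sym; rewrite sum_delta_vec.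
  by rewrite !E.
Qed.

Lemma cone_sub_ext k (u : 'I_k -> vec) v x : cone u x -> cone (ext u v) x.
Proof.
case=> lam [Hl ->]; exists (fun o => match o with Some i => lam i | None => 0 end).
by split; [case | rewrite big_optionE scale0r add0r].
Qed.

Lemma pos_convex_pc (S : set (set vec)) : fan S ->
  pairwise_positive S -> convex (PSigma S) -> pairwise_convex S.
Proof.
move=> HS Hpos Hconv s t Hadj k u v v' Hrep.
have [Hz1 Hz2 Es Et] := Hrep.
have Ecard : d = #|{: option 'I_k}| by rewrite (zb_card Hz1).
pose h : 'I_d -> option 'I_k := enum_val \o cast_ord Ecard.
have hb : bijective h.
  apply: bij_comp; first exact: enum_val_bij.
  by exists (cast_ord (esym Ecard)); [exact: cast_ordK | exact: cast_ordKV].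
have [[Hst Hsd] [Htt Htd] Hne _] := Hadj.
have Hvv : v <> v' by move=> E; apply: Hne; rewrite Es Et E.
have HvP : PSigma S v.
  exists s; split; first by split.
  exists (fun j => ext u v (h j)); split.
  - exact: zb_reindex.
  - by rewrite cone_reindex.
  - by rewrite cone_le1_reindex //; apply: (basis_le1 None Hz1).
have Hv'P : PSigma S v'.
  exists t; split; first by split.
  exists (fun j => ext u v' (h j)); split.
  - exact: zb_reindex.
  - by rewrite cone_reindex.
  - by rewrite cone_le1_reindex //; apply: (basis_le1 None Hz2).
have h0 : (0 : R) <= 2^-1 by rewrite invr_ge0 ler0n.
have h1 : (2^-1 : R) <= 1 by rewrite invf_le1 ?ler1n // ltr0n.
have [s'' [[HS'' _] [b'' [Hb'' Es'' Hm]]]] := Hconv v v' 2^-1 HvP Hv'P h0 h1.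
apply: (cond_half Hz1 Hz2 Hvv).
have Hms : s ((1 - 2^-1) *: v + 2^-1 *: v').
  rewrite Es; apply: cone_sub_ext.
  have -> : (1 - 2^-1 : R) = 2^-1 by lra.
  rewrite -scalerDr.
  have [lam [Hl ->]] := Hpos s t Hadj k u v v' Hrep.
  exists (fun i => 2^-1 * lam i); split; first by move=> i; rewrite mulr_ge0.
  by rewrite scaler_sumr; apply: eq_bigr => i _; rewrite scalerA.
exact: (P_cap HS Hst HS'' Hz1 Hb'' Es Es'' Hms Hm).
Qed.

End I.

Section J.
Variables (R : realType) (d : nat).
Local Notation vec := 'rV[R]_d.

Lemma nat_max (P : nat -> Prop) (n : nat) : P 0%N -> (forall r, P r -> (r <= n)%N) ->
  exists r, P r /\ ~ P r.+1.
Proof.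
move=> P0 Hb; apply: contrapT => Hno.
have H : forall r, P r by elim=> // r IH; apply: contrapT => Hr; apply: Hno; exists r.
by have := Hb _ (H n.+1); rewrite ltnn.
Qed.

Lemma dim_ge_ext (C : set vec) (w : vec) r (y : 'I_r -> vec) p :
  lin_indep y -> (forall l, dotv w (y l) = 0) -> dotv w p != 0 ->
  lin_indep (fun l : 'I_r.+1 => match unlift ord_max l with Some l' => y l' | None => p end).
Proof.
move=> Hy Hw Hp c Hc.
rewrite (bigD1_ord ord_max) //= unlift_none in Hc.
have Hc' : c ord_max *: p + \sum_(l < r) c (lift ord_max l) *: y l = 0.
  by rewrite -[RHS]Hc; congr (_ + _); apply: eq_bigr => l _; rewrite liftK.
have Hm : c ord_max = 0.
  have := f_equal (dotv w) Hc'; rewrite dotvD dotvZ dotv_sum dotv0.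
  rewrite big1 ?addr0 => [/eqP|l _]; last by rewrite Hw mulr0.
  by rewrite mulf_eq0 (negbTE Hp) orbF => /eqP.
rewrite Hm scale0r add0r in Hc'.
have Hl := Hy _ Hc'.
move=> l; case: (unliftP ord_max l) => [l' ->|->] //; exact: Hl.
Qed.

Lemma max_exists (S : set (set vec)) : fan S -> complete_fan S ->
  forall z, exists C, maximal_cone S C /\ C z.
Proof.
move=> HS Hcomp z.
pose P r := exists C, [/\ S C, C z & dim_ge C r].
have P0 : P 0%N.
  have [C [HC Cz]] := Hcomp z.
  by exists C; split => //; exists (fun i : 'I_0 => 0); split => [[]|c _ []].
have Pb : forall r, P r -> (r <= d)%N.
  move=> r [C [_ _ [y [_ Hy]]]].
  apply: (dim_le Hy (a := fun j : 'I_d => (delta_mx 0 j : vec))).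
  by move=> l; exists (fun j => y l 0 j); apply: row_sum_delta.
have [r [[C [HC Cz [y [HyC Hy]]]] Hnr]] := nat_max P0 Pb.
exists C; split => //; split => // C' HC' Hsub.
apply: contrapT => Hne.
have [_ HF Hint] := HS.
have [_ Hf] := Hint C C' HC HC'.
rewrite (setIidl Hsub) in Hf.
have [w [Hw EC]] := Hf.
have [p [Hp1 Hp2]] : exists p, C' p /\ dotv w p != 0.
  apply: contrapT => Hno; apply: Hne; rewrite predeqE => x; split.
    move=> Hx; rewrite EC; split => //; apply/eqP; apply: contrapT => Hx0.
    by apply: Hno; exists x; split => //; apply/negP.
  by move/Hsub.
apply: Hnr; exists C'; split => //; first exact: Hsub.
exists (fun l : 'I_r.+1 => match unlift ord_max l with Some l' => y l' | None => p end).
split.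
  by move=> l; case: (unliftP ord_max l) => [l' _|_] //; apply/Hsub/HyC.
apply: dim_ge_ext Hy _ Hp2 => //.
by move=> l; have := HyC l; rewrite EC; case.
Qed.

Lemma cover (S : set (set vec)) : nonsingular_fan S -> complete_fan S ->
  forall z, exists C (b : 'I_d -> vec), [/\ maximal_cone S C, Zbasis b, C = cone b & C z].
Proof.
move=> [HS Hns] Hcomp z.
have [C [HC Cz]] := max_exists HS Hcomp z.
have [b [Hb EC]] := Hns C HC.
by exists C, b.
Qed.

End J.

Section K.
Variables (R : realType) (d : nat).
Local Notation vec := 'rV[R]_d.

Lemma wall_calc k (u : 'I_k -> vec) v v' (mu : 'I_k -> R) x :
  Zbasis (ext u v) -> Zbasis (ext u v') -> (forall i, 0 <= mu i) -> \sum_i mu i <= 1 ->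
  v' + v = \sum_i (2 * mu i) *: u i -> coord (ext u v) x None <= 0 ->
  ht (ext u v) x <= ht (ext u v') x.
Proof.
move=> Hz1 Hz2 Hmu1 Hmu2 Hvv Hx.
have [Hv1 Hv2] := coord_ext_v' Hz2 Hvv.
have He'v : ht (ext u v') v = -1 + \sum_i 2 * mu i.
  by rewrite /ht big_optionE Hv1; under eq_bigr => i _ do rewrite Hv2.
have Hu : forall i, ht (ext u v') (u i) = 1.
  by move=> i; exact: (ht_basis (Some i) Hz2).
rewrite {2}(coordE Hz1 x) ht_lin // big_optionE /= He'v.
under eq_bigr => i _ do rewrite Hu mulr1.
rewrite /ht big_optionE -mulr_sumr.
set M := \sum_i mu i in Hmu2 *.
set A := \sum_i coord (ext u v) x (Some i).
have HM0 : 0 <= M by apply: sumr_ge0.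
nra.
Qed.

Lemma wall (S : set (set vec)) (C C' : set vec) (b b' : 'I_d -> vec) j0 :
  fan S -> pairwise_convex S -> S C -> S C' -> Zbasis b -> Zbasis b' ->
  C = cone b -> C' = cone b' -> C <> C' -> (0 < d)%N ->
  C `&` C' = [set x | cone b x /\ coord b x j0 = 0] ->
  forall x, coord b x j0 <= 0 -> ht b x <= ht b' x.
Proof.
move=> HS Hpc HC HC' Hb Hb' EC EC' Hne d0 EF x Hx.
have [_ _ Hint] := HS.
have [_ HF'] := Hint C C' HC HC'.
rewrite EF in HF'.
have HF'b : face [set x | cone b x /\ coord b x j0 = 0] (cone b') by rewrite -EC'.
have [q [Hz2 Ec2 _]] := facet_repr d0 Hb Hb' HF'b.
have [Hz1 Ec1 _] := ext_repr j0 Hb.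
set u := fun i => b (lift j0 i) in Hz1 Hz2 Ec1 Ec2.
have Hadj : adjacent S C C'.
  split => //.
  - by split => //; rewrite EC; apply: top_dim.
  - by split => //; rewrite EC'; apply: top_dim.
  exists [set x | cone b x /\ coord b x j0 = 0]; split => //.
    by rewrite EC; apply: facet_face.
  exact: facet_dim.
have Hrep : adj_repr C C' u (b j0) (b' q) by split => //; rewrite ?EC ?EC'.
have [mu [Hmu1 Hmu2 Hmu3]] := disj_mu (Hpc C C' Hadj _ _ _ _ Hrep).
have Hmu3' : b' q + b j0 = \sum_i (2 * mu i) *: u i by rewrite addrC.
rewrite (ht_same Hb Hz1 Ec1) (ht_same Hb' Hz2 Ec2).
apply: (wall_calc Hz1 Hz2 Hmu1 Hmu2 Hmu3').
by rewrite /u ext_hj (coord_reindex (hj_bij j0) Hb).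
Qed.

End K.

Lemma seq_min (R : realType) (T : eqType) (l : seq T) (P : T -> R -> Prop) :
  (forall a, a \in l -> exists e, 0 < e /\ P a e) ->
  (forall a e e', P a e -> 0 < e' -> e' <= e -> P a e') ->
  exists e, 0 < e /\ forall a, a \in l -> P a e.
Proof.
move=> H Hm; elim: l H => [|a l IH] H.
  by exists 1; split => // a; rewrite in_nil.
have [e1 [He1 HP1]] := IH (fun x Hx => H x (mem_behead (s := a :: l) Hx)).
have [e2 [He2 HP2]] := H a (mem_head a l).
case: (lerP e1 e2) => He.
  exists e1; split => // x; rewrite in_cons => /orP [/eqP -> | Hx].
    exact: (Hm _ _ _ HP2 He1 He).
  exact: HP1.
exists e2; split => // x; rewrite in_cons => /orP [/eqP -> | Hx] //.
exact: (Hm _ _ _ (HP1 x Hx) He2 (ltW He)).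
Qed.

Lemma aff_persist (R : realType) (g D : R) : 0 < g ->
  exists del, 0 < del /\ forall e, 0 <= e -> e < del -> 0 < g + e * D.
Proof.
move=> Hg; case: (lerP 0 D) => HD.
  exists 1; split => // e He _.
  by apply: (lt_le_trans Hg); rewrite lerDl; apply: mulr_ge0.
exists (g / - D); split; first by rewrite divr_gt0 // oppr_gt0.
move=> e He1 He2.
have : e * - D < g by rewrite -ltr_pdivlMr // oppr_gt0.
lra.
Qed.

Section L.
Variables (R : realType) (d : nat).
Local Notation vec := 'rV[R]_d.

Definition pt (p q : vec) (t : R) : vec := (1 - t) *: p + t *: q.

Lemma coord_pt (I : finType) (c : I -> vec) p q t j : Zbasis c ->
  coord c (pt p q t) j = (1 - t) * coord c p j + t * coord c q j.
Proof. by move=> Hc; rewrite /pt coordD // !coordZ. Qed.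

Lemma ht_pt (I : finType) (c : I -> vec) p q t : Zbasis c ->
  ht c (pt p q t) = (1 - t) * ht c p + t * ht c q.
Proof.
move=> Hc; rewrite /ht; under eq_bigr => j _ do rewrite coord_pt //.
by rewrite big_split /= -!mulr_sumr.
Qed.

End L.

Lemma three_min (R : realType) (a b c : R) : 0 < a -> 0 < b -> 0 < c ->
  exists e, [/\ 0 < e, e < a, e < b & e < c].
Proof.
move=> Ha Hb Hc.
case: (lerP a b) => Hab.
  by case: (lerP a c) => Hac; [exists (a / 2) | exists (c / 2)]; split; lra.
by case: (lerP b c) => Hbc; [exists (b / 2) | exists (c / 2)]; split; lra.
Qed.

Section M.
Variables (R : realType) (d : nat) (S : set (set 'rV[R]_d)).
Local Notation vec := 'rV[R]_d.
Hypothesis HS : nonsingular_fan S.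
Hypothesis Hcomp : complete_fan S.
Hypothesis Hpc : pairwise_convex S.
Hypothesis d0 : (0 < d)%N.
Variable ms : seq (set vec).
Hypothesis Hms : forall C, maximal_cone S C <-> C \in ms.
Variable B : set vec -> 'I_d -> vec.
Hypothesis HB : forall C, maximal_cone S C -> Zbasis (B C) /\ C = cone (B C).

Definition generic (p q : vec) := forall C, maximal_cone S C -> forall t, 0 <= t -> t <= 1 ->
  forall j1 j2, j1 != j2 -> ~ (coord (B C) (pt p q t) j1 = 0 /\ coord (B C) (pt p q t) j2 = 0).

Lemma sweep (tau : set vec) (p q : vec) : maximal_cone S tau -> tau p -> generic p q ->
  exists C, [/\ maximal_cone S C, C q & ht (B tau) q <= ht (B C) q].
Proof.
move=> Htau Hp Hgen.
set b0 := B tau.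
pose DC (C : set vec) (t : R) := [/\ 0 <= t, t <= 1, C (pt p q t) &
   forall s, t <= s -> ht b0 (pt p q s) <= ht (B C) (pt p q s)].
pose Dset := [set t | exists C, maximal_cone S C /\ DC C t].
have D0 : Dset 0.
  exists tau; split => //; split => //; first by rewrite /pt subr0 scale1r scale0r addr0.
have Dub : ubound Dset 1 by move=> t [C [_ [_ H _ _]]].
have Dsup : has_sup Dset by split; [exists 0 | exists 1].
set ts := sup Dset.
have Dle : forall t, Dset t -> t <= ts by move=> t Ht; apply: sup_upper_bound.
have ts0 : 0 <= ts by apply: Dle.
have ts1 : ts <= 1 by apply: ge_sup => //; exists 0.
have [C [HC HDC]] : exists C, maximal_cone S C /\ DC C ts.
  apply: contrapT => Hno.
  have Heps : forall C, C \in ms -> exists e, 0 < e /\ (forall t, DC C t -> t <= ts - e).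
    move=> C /Hms HC.
    apply: contrapT => Hne.
    apply: Hno; exists C; split => //.
    have Hclose : forall e, 0 < e -> exists t, DC C t /\ ts - e < t.
      move=> e He; apply: contrapT => Hn; apply: Hne; exists e; split => // t Ht.
      rewrite leNgt; apply/negP => Hlt; apply: Hn; exists t; split => //.
    have [t0 [Ht0 _]] := Hclose 1 ltr01.
    have [Hb Hcb] := HB HC.
    split => //.
    - rewrite Hcb; apply/(coneP Hb) => j.
      rewrite leNgt; apply/negP => Hneg.
      have Hg : 0 < - coord (B C) (pt p q ts) j by rewrite oppr_gt0.
      have [dl [Hdl Hd]] := aff_persist (coord (B C) q j - coord (B C) p j) Hg.
      have [t [Ht Htlt]] := Hclose dl Hdl.
      have Htle : t <= ts by apply: Dle; exists C.
      have := Hd (ts - t); rewrite subr_ge0 => /(_ Htle).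
      have Hlt2 : ts - t < dl by lra.
      move=> /(_ Hlt2).
      case: Ht => _ _ Hct _.
      rewrite Hcb in Hct.
      have := proj1 (coneP Hb _) Hct j.
      rewrite !coord_pt //.
      nra.
    - move=> s Hs; have Hle : t0 <= ts by apply: Dle; exists C.
      by case: Ht0 => _ _ _ H; apply: H; exact: le_trans Hle Hs.
  have Hm : forall (a : set vec) e e', (forall t, DC a t -> t <= ts - e) -> 0 < e' -> e' <= e ->
      (forall t, DC a t -> t <= ts - e').
    move=> a e e' H _ He t Ht; have := H t Ht; lra.
  have [e [He HP]] := seq_min Heps Hm.
  have [t Ht Hlt] := sup_adherent He Dsup.
  case: Ht => C [HC HDt].
  have := HP C (proj1 (Hms C) HC) t HDt.
  rewrite -/ts in Hlt; lra.
have [Hb Hcb] := HB HC.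
have ts_eq1 : ts = 1.
  apply: contrapT => Hne1.
  have ts_lt1 : ts < 1 by rewrite lt_neqAle ts1 andbT; apply/eqP.
  set xs := pt p q ts.
  have Hxs : C xs by case: HDC.
  have H1 : forall C'', C'' \in ms -> exists e, 0 < e /\ (~ C'' xs ->
      forall eps, 0 <= eps -> eps < e -> ~ C'' (pt p q (ts + eps))).
    move=> C'' /Hms HC''.
    case: (pselect (C'' xs)) => Hx; first by exists 1; split.
    have [Hb'' Hcb''] := HB HC''.
    have [j Hj] : exists j, coord (B C'') xs j < 0.
      apply: contrapT => Hno; apply: Hx; rewrite Hcb''; apply/(coneP Hb'') => j.
      by rewrite leNgt; apply/negP => Hj; apply: Hno; exists j.
    have Hg : 0 < - coord (B C'') xs j by rewrite oppr_gt0.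
    have [dl [Hdl Hd]] := aff_persist (coord (B C'') p j - coord (B C'') q j) Hg.
    exists dl; split => // _ eps Hea Heb; rewrite Hcb'' => Hin; have := proj1 (coneP Hb'' _) Hin j.
    have := Hd eps Hea Heb; rewrite /xs !coord_pt //.
    nra.
  have Hm1 : forall (a : set vec) e e', (~ a xs ->
      forall eps, 0 <= eps -> eps < e -> ~ a (pt p q (ts + eps))) -> 0 < e' -> e' <= e ->
      (~ a xs -> forall eps, 0 <= eps -> eps < e' -> ~ a (pt p q (ts + eps))).
    move=> a e e' H _ He Ha eps Hea Heb; apply: H => //; lra.
  have [e1 [He1 HP1]] := seq_min H1 Hm1.
  have H2 : forall j, j \in enum 'I_d -> exists e, 0 < e /\ (0 < coord (B C) xs j ->
      forall eps, 0 <= eps -> eps < e -> 0 < coord (B C) (pt p q (ts + eps)) j).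
    move=> j _.
    case: (lerP (coord (B C) xs j) 0) => Hj.
      by exists 1; split => // Hc; exfalso; move: (lt_le_trans Hc Hj); rewrite ltxx.
    have [dl [Hdl Hd]] := aff_persist (coord (B C) q j - coord (B C) p j) Hj.
    exists dl; split => // _ eps Hea Heb; have := Hd eps Hea Heb.
    rewrite /xs !coord_pt //.
    nra.
  have Hm2 : forall (j : 'I_d) e e', (0 < coord (B C) xs j ->
      forall eps, 0 <= eps -> eps < e -> 0 < coord (B C) (pt p q (ts + eps)) j) -> 0 < e' -> e' <= e ->
      (0 < coord (B C) xs j ->
      forall eps, 0 <= eps -> eps < e' -> 0 < coord (B C) (pt p q (ts + eps)) j).
    move=> j e e' H _ He Ha eps Hea Heb; apply: H => //; lra.
  have [e2 [He2 HP2]] := seq_min H2 Hm2.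
  have Hts : 0 < 1 - ts by lra.
  have [eps [Heps0 Heps1 Heps2 Heps3]] := three_min He1 He2 Hts.
  set z := pt p q (ts + eps).
  have [C' [b' [HC' _ _ Hz]]] := cover HS Hcomp z.
  have HxsC' : C' xs.
    apply: contrapT => Hn.
    exact: (HP1 C' (proj1 (Hms C') HC') Hn eps (ltW Heps0) Heps1 Hz).
  case: (pselect (C z)) => HzC.
    have : Dset (ts + eps).
      exists C; split => //; split => //; [lra | lra | ].
      by move=> s Hs; case: HDC => _ _ _ H; apply: H; lra.
    by move/Dle; lra.
  have [j0 Hj0] : exists j0, coord (B C) z j0 < 0.
    apply: contrapT => Hno; apply: HzC; rewrite Hcb; apply/(coneP Hb) => j.
    by rewrite leNgt; apply/negP => Hj; apply: Hno; exists j.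
  have HxsC : cone (B C) xs by rewrite -Hcb.
  have Hxs0 : coord (B C) xs j0 = 0.
    have Hge := proj1 (coneP Hb xs) HxsC j0.
    apply/eqP; rewrite eq_le Hge andbT leNgt; apply/negP => Hpos.
    have := HP2 j0 (mem_enum _ _) Hpos eps (ltW Heps0) Heps2.
    rewrite -/z; lra.
  have HCC' : C <> C' by move=> E; apply: HzC; rewrite E.
  have [HSf _] := HS; have [_ _ Hint] := HSf.
  have [HF _] := Hint C C' (proj1 HC) (proj1 HC').
  have HFb : face (C `&` C') (cone (B C)) by rewrite -Hcb.
  have [w [Hw EF]] := face_cone Hb HFb.
  have Hxx : (C `&` C') xs by split.
  rewrite EF in Hxx.
  have Hwpos : forall j, 0 < dotv w (B C j) -> j = j0.
    move=> j Hj; have Hz0 := proj2 Hxx j Hj.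
    apply/eqP; apply: contrapT => /negP Hne.
    exact: (Hgen C HC ts ts0 ts1 j j0 Hne (conj Hz0 Hxs0)).
  have Hw0 : 0 < dotv w (B C j0).
    apply: contrapT => Hn.
    have Hsub : C `<=` C'.
      move=> x Hx.
      have : (C `&` C') x.
        rewrite EF; split; first by rewrite -Hcb.
        by move=> j Hj; exfalso; apply: Hn; rewrite -(Hwpos j Hj).
      by case.
    by apply: HCC'; symmetry; apply: (proj2 HC) => //; exact: (proj1 HC').
  have EF' : C `&` C' = [set x | cone (B C) x /\ coord (B C) x j0 = 0].
    rewrite EF predeqE => x /=; split; move=> [Hx H]; split => //.
      by apply: H.
    by move=> j Hj; rewrite (Hwpos j Hj).
  have [Hb'' Hcb''] := HB HC'.
  have Hwall := wall (proj1 HS) Hpc (proj1 HC) (proj1 HC') Hb Hb'' Hcb Hcb'' HCC' d0 EF'.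
  have : Dset (ts + eps).
    exists C'; split => //; split => //; [lra | lra | ].
    move=> s Hs.
    apply: le_trans (Hwall _ _).
      by case: HDC => _ _ _ H; apply: H; lra.
    move: Hj0 Hxs0; rewrite /z /xs !coord_pt //.
    set A := coord (B C) p j0; set Bq := coord (B C) q j0 => Hj0 Hxs0.
    have HD : Bq - A < 0 by nra.
    nra.
  by move/Dle; lra.
have : DC C 1 by rewrite -ts_eq1.
case=> _ _ Hq Hinv; exists C; split => //.
  by move: Hq; rewrite /pt subrr scale0r add0r scale1r.
by have := Hinv 1 (lexx _); rewrite /pt subrr scale0r add0r scale1r.
Qed.

End M.

Lemma avoid_reals (R : realType) (l : seq R) (e0 : R) : 0 < e0 ->
  exists e, [/\ 0 < e, e < e0 & e \notin l].
Proof.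
elim: l e0 => [|a l IH] e0 He0.
  by exists (e0 / 2); split; rewrite ?in_nil //; lra.
case: (pselect (0 < a /\ a < e0)) => [[Ha1 Ha2]|Hna].
  have [e [He1 He2 He3]] := IH a Ha1.
  exists e; split => //; first exact: lt_trans He2 Ha2.
  by rewrite in_cons negb_or He3 andbT; apply/eqP => E; rewrite E ltxx in He2.
have [e [He1 He2 He3]] := IH e0 He0.
exists e; split => //.
rewrite in_cons negb_or He3 andbT; apply/eqP => E; apply: Hna; rewrite -E; split => //.
Qed.

Section N.
Variables (R : realType) (d : nat).
Local Notation vec := 'rV[R]_d.

Lemma avoid_e (T : eqType) (l : seq T) (f : T -> vec) :
  (forall a, a \in l -> exists y, dotv (f a) y != 0) ->
  exists e, forall a, a \in l -> dotv (f a) e != 0.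
Proof.
elim: l => [|a l IH] H.
  by exists 0 => a; rewrite in_nil.
have [e He] := IH (fun x Hx => H x (mem_behead (s := a :: l) Hx)).
case: (boolP (dotv (f a) e != 0)) => Hae.
  by exists e => x; rewrite in_cons => /orP [/eqP -> | /He].
move/negPn/eqP: Hae => Hae.
have [g Hg] := H a (mem_head a l).
have [eps [Heps1 _ Heps3]] := avoid_reals
   [seq - dotv (f x) e / dotv (f x) g | x <- l] ltr01.
exists (e + eps *: g) => x; rewrite in_cons => /orP [/eqP -> | Hx].
  by rewrite dotvD dotvZ Hae add0r mulf_neq0 // gt_eqF.
rewrite dotvD dotvZ.
case: (eqVneq (dotv (f x) g) 0) => Hxg.
  by rewrite Hxg mulr0 addr0; apply: He.
apply/eqP => E.
move/negP: Heps3; apply; apply/mapP; exists x => //.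
have -> : - dotv (f x) e = eps * dotv (f x) g.
  by apply/eqP; rewrite eq_sym -addr_eq0 addrC E.
by rewrite mulfK.
Qed.

Lemma avoid_pt (T : eqType) (l : seq T) (f : T -> vec) (e x0 : vec) (e0 : R) :
  (forall a, a \in l -> dotv (f a) e != 0) -> 0 < e0 ->
  exists eps, [/\ 0 < eps, eps < e0 & forall a, a \in l -> dotv (f a) (x0 + eps *: e) != 0].
Proof.
move=> He He0.
have [eps [Heps1 Heps2 Heps3]] := avoid_reals
   [seq - dotv (f x) x0 / dotv (f x) e | x <- l] He0.
exists eps; split => // x Hx.
rewrite dotvD dotvZ; apply/eqP => E.
move/negP: Heps3; apply; apply/mapP; exists x => //.
have Hxe := He x Hx.
have -> : - dotv (f x) x0 = eps * dotv (f x) e.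
  by apply/eqP; rewrite eq_sym -addr_eq0 addrC E.
by rewrite mulfK.
Qed.

End N.

Section O.
Variables (R : realType) (d : nat) (S : set (set 'rV[R]_d)).
Local Notation vec := 'rV[R]_d.
Hypothesis HS : nonsingular_fan S.
Hypothesis Hcomp : complete_fan S.
Hypothesis Hpc : pairwise_convex S.
Hypothesis d0 : (0 < d)%N.
Variable ms : seq (set vec).
Hypothesis Hms : forall C, maximal_cone S C <-> C \in ms.
Variable B : set vec -> 'I_d -> vec.
Hypothesis HB : forall C, maximal_cone S C -> Zbasis (B C) /\ C = cone (B C).

Lemma htD (I : finType) (c : I -> vec) x y : Zbasis c -> ht c (x + y) = ht c x + ht c y.
Proof. by move=> Hc; rewrite /ht -big_split; apply: eq_bigr => j _; rewrite coordD. Qed.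

Lemma htZ (I : finType) (c : I -> vec) a x : Zbasis c -> ht c (a *: x) = a * ht c x.
Proof. by move=> Hc; rewrite /ht mulr_sumr; apply: eq_bigr => j _; rewrite coordZ. Qed.

Lemma dotvDl (w1 w2 x : vec) : dotv (w1 + w2) x = dotv w1 x + dotv w2 x.
Proof. by rewrite /dotv -big_split; apply: eq_bigr => k _; rewrite mxE mulrDl. Qed.

Lemma dotvZl (w x : vec) a : dotv (a *: w) x = a * dotv w x.
Proof. by rewrite /dotv mulr_sumr; apply: eq_bigr => k _; rewrite mxE mulrA. Qed.

Lemma dotvNl (w x : vec) : dotv (- w) x = - dotv w x.
Proof. by rewrite -scaleN1r dotvZl mulN1r. Qed.

Lemma coord_sum_basis (I : finType) (c : I -> vec) j : Zbasis c ->
  coord c (\sum_i c i) j = 1.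
Proof.
move=> Hc; apply: (coord_uniq Hc (lam := fun _ => 1)).
by under [RHS]eq_bigr => i _ do rewrite scale1r.
Qed.

Lemma key (tau sig : set vec) (bs : 'I_d -> vec) x :
  maximal_cone S tau -> S sig -> Zbasis bs -> sig = cone bs -> sig x ->
  ht (B tau) x <= ht bs x.
Proof.
move=> Htau Hsig Hbs Esig Hx.
have [Hbt Hct] := HB Htau.
have [wv Hwv] : exists wv : set vec -> 'I_d -> vec, forall C, maximal_cone S C ->
    forall j y, dotv (wv C j) y = coord (B C) y j.
  apply: (choice (fun C (wC : 'I_d -> vec) => maximal_cone S C ->
    forall j y, dotv (wC j) y = coord (B C) y j)) => C.
  case: (pselect (maximal_cone S C)) => HC; last by exists (fun _ => 0).
  have [Hb _] := HB HC.
  have [wC HwC] := choice (fun j (w : vec) => forall y, dotv w y = coord (B C) y j)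
     (fun j => dual_vec j Hb).
  by exists wC => _ j y; apply: HwC.
pose l1 := [seq (C, j) | C <- ms, j <- enum 'I_d].
pose f1 (a : set vec * 'I_d) := wv a.1 a.2.
have Hl1 : forall a, a \in l1 -> exists y, dotv (f1 a) y != 0.
  move=> a /allpairsP [[C j] [/= HC _ ->]].
  have HC' := proj2 (Hms C) HC.
  exists (B C j); rewrite /f1 /= Hwv // coord_basis ?eqxx ?oner_eq0 //.
  by case: (HB HC').
have [e1 He1] := avoid_e Hl1.
pose p0 := \sum_j B tau j.
have Hpos : forall j, j \in enum 'I_d -> exists e, 0 < e /\
    (forall eps, 0 <= eps -> eps < e -> 0 < 1 + eps * coord (B tau) e1 j).
  by move=> j _; apply: aff_persist; apply: ltr01.
have Hm : forall (j : 'I_d) e e', (forall eps, 0 <= eps -> eps < e ->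
      0 < 1 + eps * coord (B tau) e1 j) -> 0 < e' -> e' <= e ->
    (forall eps, 0 <= eps -> eps < e' -> 0 < 1 + eps * coord (B tau) e1 j).
  by move=> j e e' H _ He eps Ha Hb; apply: H => //; lra.
have [dp [Hdp HPdp]] := seq_min Hpos Hm.
have [eps [Heps0 Heps1 Heps2]] := avoid_pt p0 He1 Hdp.
pose p := p0 + eps *: e1.
have Hcp : forall j, coord (B tau) p j = 1 + eps * coord (B tau) e1 j.
  by move=> j; rewrite coordD // coordZ // coord_sum_basis.
have Hp : tau p.
  rewrite Hct; apply/(coneP Hbt) => j; rewrite Hcp.
  by apply: ltW; apply: HPdp => //; [rewrite mem_enum | exact: ltW].
have Hpnz : forall C, maximal_cone S C -> forall j, coord (B C) p j != 0.
  move=> C HC j; rewrite -Hwv //.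
  have := Heps2 (C, j); rewrite /f1 /=; apply.
  by apply/allpairsP; exists (C, j); split => //=; [apply/Hms | rewrite mem_enum].
pose l2 := [seq (C, jj) | C <- ms, jj <- [seq (j1, j2) | j1 <- enum 'I_d, j2 <- enum 'I_d]].
pose f2 (a : set vec * ('I_d * 'I_d)) : vec :=
  if a.2.1 == a.2.2 then wv a.1 a.2.1
  else coord (B a.1) p a.2.2 *: wv a.1 a.2.1 - coord (B a.1) p a.2.1 *: wv a.1 a.2.2.
have Hl2 : forall a, a \in l2 -> exists y, dotv (f2 a) y != 0.
  move=> a /allpairsP [[C [j1 j2]] [/= HC _ ->]].
  have HC' := proj2 (Hms C) HC.
  have [Hb _] := HB HC'.
  exists (B C j1); rewrite /f2 /=.
  case: ifP => [_|/negbT Hne].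
    by rewrite Hwv // coord_basis // eqxx oner_eq0.
  rewrite dotvDl dotvNl !dotvZl !Hwv // !coord_basis // eqxx mulr1.
  rewrite (_ : (j2 == j1)%:R = 0 :> R); last first.
    by case: eqP => // E; rewrite E eqxx in Hne.
  by rewrite mulr0 subr0; apply: Hpnz.
have [e2 He2] := avoid_e Hl2.
rewrite leNgt; apply/negP => Hlt.
set L := fun y => ht (B tau) y - ht bs y.
have HLD : forall y z, L (y + z) = L y + L z.
  by move=> y z; rewrite /L !htD //; lra.
have HLZ : forall a y, L (a *: y) = a * L y.
  by move=> a y; rewrite /L !htZ //; lra.
have Heta : 0 < L x by rewrite /L subr_gt0.
pose ps := \sum_j bs j.
have [dk [Hdk Hdkp]] := aff_persist (L ps) Heta.
pose kap := dk / 2.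
have Hkap0 : 0 < kap by rewrite /kap; lra.
pose q0 := x + kap *: ps.
have HLq0 : 0 < L q0.
  by rewrite /q0 HLD HLZ; apply: Hdkp; rewrite /kap; lra.
have [d1 [Hd1 Hd1p]] := aff_persist (L e2) HLq0.
have Hposq : forall j, j \in enum 'I_d -> exists e, 0 < e /\
    (forall eps, 0 <= eps -> eps < e -> 0 < kap + eps * coord bs e2 j).
  by move=> j _; apply: aff_persist.
have Hmq : forall (j : 'I_d) e e', (forall eps, 0 <= eps -> eps < e ->
      0 < kap + eps * coord bs e2 j) -> 0 < e' -> e' <= e ->
    (forall eps, 0 <= eps -> eps < e' -> 0 < kap + eps * coord bs e2 j).
  by move=> j e e' H _ He eps' Ha Hb; apply: H => //; lra.
have [d2 [Hd2 Hd2p]] := seq_min Hposq Hmq.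
have [e0 [He00 He01 He02 _]] := three_min Hd1 Hd2 ltr01.
have [eps' [Heps'0 Heps'1 Heps'2]] := avoid_pt q0 He2 He00.
pose q := q0 + eps' *: e2.
have Hq : sig q.
  rewrite Esig; apply/(coneP Hbs) => j.
  rewrite /q /q0 !coordD // !coordZ // coord_sum_basis // mulr1.
  have Hxj := proj1 (coneP Hbs x) (eq_ind _ (fun A => A x) Hx _ Esig) j.
  have := Hd2p j (mem_enum _ _) eps' (ltW Heps'0) (lt_trans Heps'1 He02).
  lra.
have Hgen : generic S B p q.
  move=> C HC t t0 t1 j1 j2 Hne [Hz1 Hz2].
  have HCm := proj1 (Hms C) HC.
  have Ha : (C, (j1, j2)) \in l2.
    apply/allpairsP; exists (C, (j1, j2)); split => //=.
    by apply/allpairsP; exists (j1, j2); split => //=; rewrite mem_enum.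
  have := Heps'2 _ Ha; rewrite /f2 /= (negbTE Hne).
  set N := _ - _.
  have HN : forall y, dotv N y = coord (B C) p j2 * coord (B C) y j1
                                 - coord (B C) p j1 * coord (B C) y j2.
    by move=> y; rewrite /N dotvDl dotvNl !dotvZl !Hwv.
  have HNp : dotv N p = 0 by rewrite HN mulrC subrr.
  have HNt : dotv N (pt p q t) = 0 by rewrite HN Hz1 Hz2 !mulr0 subrr.
  move=> HNq.
  have HNt' : (1 - t) * dotv N p + t * dotv N q = 0.
    by rewrite -[RHS]HNt /pt [in RHS]dotvD [in RHS]dotvZ [in RHS]dotvZ.
  rewrite HNp mulr0 add0r in HNt'.
  move/eqP: HNt'; rewrite mulf_eq0 => /orP [/eqP Et|/eqP HNq0]; last first.
    by rewrite HNq0 eqxx in HNq.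
  move: Hz1; rewrite /pt Et subr0 scale1r scale0r addr0 => Hz1.
  by move/eqP: (Hpnz C HC j1).
have [C [HC HCq Hht]] := sweep HS Hcomp Hpc d0 Hms HB Htau Hp Hgen.
have [Hbc Hcc] := HB HC.
have Eh := height_eq (proj1 HS) (proj1 HC) Hsig Hbc Hbs Hcc Esig HCq Hq.
have HLq : L q <= 0 by rewrite /L -Eh subr_le0.
have : 0 < L q.
  rewrite /q HLD HLZ; apply: Hd1p; first exact: ltW.
  exact: lt_trans Heps'1 He01.
lra.
Qed.

End O.

Section P.
Variables (R : realType) (d : nat) (S : set (set 'rV[R]_d)).
Local Notation vec := 'rV[R]_d.

Lemma P_convex : nonsingular_fan S -> complete_fan S -> pairwise_convex S -> (0 < d)%N ->
  forall ms : seq (set vec), (forall C, maximal_cone S C <-> C \in ms) ->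
  forall B : set vec -> 'I_d -> vec,
  (forall C, maximal_cone S C -> Zbasis (B C) /\ C = cone (B C)) ->
  convex (PSigma S).
Proof.
move=> HS Hcomp Hpc d0 ms Hms B HB.
move=> x y t [sx [[HSx _] [bx [Hbx Esx Hx]]]] [sy [[HSy _] [by_ [Hby Esy Hy]]]] t0 t1.
have [C [b [HC _ _ Hz]]] := cover HS Hcomp ((1 - t) *: x + t *: y).
have [HbC HcC] := HB C HC.
exists C; split.
  by split; [exact: (proj1 HC) | rewrite HcC; exact: top_dim].
exists (B C); split => //.
apply/(cone_le1P HbC); split.
  by apply/(coneP HbC); rewrite -HcC.
rewrite -/(ht (B C) _) htD // !htZ //.
have Hxs : sx x by rewrite Esx; apply: le1_cone.
have Hys : sy y by rewrite Esy; apply: le1_cone.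
have Kx := key HS Hcomp Hpc d0 Hms HB HC HSx Hbx Esx Hxs.
have Ky := key HS Hcomp Hpc d0 Hms HB HC HSy Hby Esy Hys.
have Hx1 : ht bx x <= 1 by case: (proj1 (cone_le1P Hbx x) Hx).
have Hy1 : ht by_ y <= 1 by case: (proj1 (cone_le1P Hby y) Hy).
nra.
Qed.

Lemma convex_d0 : d = 0%N -> convex (PSigma S).
Proof.
move=> Hd.
have H0 : forall z : vec, z = 0.
  move=> z; rewrite (row_sum_delta z); apply: big1 => j _; exfalso.
  by have := ltn_ord j; rewrite {2}Hd.
move=> x y t Hx _ _ _.
by rewrite (H0 ((1 - t) *: x + t *: y)) -(H0 x).
Qed.

End P.

Theorem proposition5p7 (R : realType) (d : nat) (S : set (set 'rV[R]_d)) :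
  nonsingular_fan S ->
  (pairwise_convex S <->
   (forall s t, adjacent S s t ->
      forall b b' : 'I_d -> 'rV[R]_d, Zbasis b -> Zbasis b' ->
      s = cone b -> t = cone b' -> convex (cone_le1 b `|` cone_le1 b'))) /\
  (finite_set S -> complete_fan S ->
   (pairwise_convex S <-> (pairwise_positive S /\ convex (PSigma S)))).
Proof.
move=> HS; split; first exact: part1.
move=> Hfin Hcomp; split; last first.
  by case=> Hpos Hconv; apply: pos_convex_pc (proj1 HS) Hpos Hconv.
move=> Hpc; split; first exact: pc_positive.
case: (posnP d) => [Hd0|d0].
  exact: convex_d0.
have [s Es] := proj1 (finite_seqP S) Hfin.
pose ms := [seq C <- s | `[< maximal_cone S C >]].
have Hms : forall C, maximal_cone S C <-> C \in ms.
  move=> C; rewrite mem_filter; split.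
    move=> HC; apply/andP; split; first exact/asboolP.
    by have := proj1 HC; rewrite Es.
  by move/andP => [/asboolP].
have [B HB] : exists B : set 'rV[R]_d -> 'I_d -> 'rV[R]_d, forall C,
    maximal_cone S C -> Zbasis (B C) /\ C = cone (B C).
  apply: (choice (fun C b => maximal_cone S C -> Zbasis b /\ C = cone b)) => C.
  case: (pselect (maximal_cone S C)) => HC; last by exists (fun _ => 0).
  by have [b [Hb Eb]] := proj2 HS C HC; exists b.
exact: (P_convex HS Hcomp Hpc d0 Hms HB).
Qed.
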